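(* There exist, for every pair $0<v\le u<\infty$, constants $0<c_{u,v}\le C_{u,v}<\infty$ depending only on $u$ and $v$ such that the following holds. Let $d\in\mathbb N_+$, ${\bf R}=(R_1,\dots,R_d)\in\mathbb R_+^d$ with $u=\max\{R_1,\dots,R_d\}$ and $v=\min\{R_1,\dots,R_d\}$, and let $g({\bf R})=\frac{1}{1/R_1+\cdots+1/R_d}$. Write $a_n:=a_n(I_d: W_2^{\bf R}(\mathbb T^d)\to L_2(\mathbb T^d))$. Then $c_{u,v}\,\phi(n)\le a_n\le C_{u,v}\,\phi(n)$ for all $n\in\mathbb N_+$, where $$\phi(n)=\begin{cases}1, & 1\le n\le d,\\ \Big(\frac{\log(1+\frac{d}{\log n})}{\log n}\Big)^{1/2}, & d\le n\le 3^d,\\ d^{-1/2}n^{-g({\bf R})}, & n\ge 3^d.\end{cases}$$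
   Context: $\log$ denotes the logarithm to base 2. $\mathbb T=[0,2\pi]$ with endpoints identified, $\mathbb T^d$ is equipped with the normalized Lebesgue measure $(2\pi)^{-d}d{\bf x}$, and $\hat f({\bf k})=(2\pi)^{-d}\int_{\mathbb T^d}f({\bf x})e^{-i{\bf k}\cdot{\bf x}}d{\bf x}$, ${\bf k}\in\mathbb Z^d$. For ${\bf R}\in\mathbb R_+^d$, the anisotropic Sobolev space $W_2^{\bf R}(\mathbb T^d)$ is the Hilbert space of all $f\in L_2(\mathbb T^d)$ with finite norm $\|f|W_2^{\bf R}(\mathbb T^d)\|=\big(\sum_{{\bf k}\in\mathbb Z^d}(1+\sum_{j=1}^d|k_j|^{2R_j})|\hat f({\bf k})|^2\big)^{1/2}$ (equivalently $\|f\|_{L_2}^2+\sum_j\|\partial^{R_j}f/\partial x_j^{R_j}\|_{L_2}^2$ with Weyl derivatives). $I_d$ denotes the identity (embedding) operator. For a bounded linear operator $T:X\to Y$ between Banach spaces, the approximation numbers are $a_n(T)=\inf\{\|T-A\|: A:X\to Y \text{ linear}, \operatorname{rank}A<n\}$, $n\in\mathbb N_+$. *)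

(* Defs.v *)
From Stdlib Require Import Reals Lra Lia ZArith Arith List.
Open Scope R_scope.

Definition CC : Type := (R * R)%type.
Definition Cadd (a b : CC) : CC := (fst a + fst b, snd a + snd b).
Definition Cmul (a b : CC) : CC :=
  (fst a * fst b - snd a * snd b, fst a * snd b + snd a * fst b).
Definition Copp (a : CC) : CC := (- fst a, - snd a).
Definition C0 : CC := (0, 0).
Definition Cnorm2 (a : CC) : R := fst a * fst a + snd a * snd a.

(* The frequency lattice Z^d: integer lists of length d. *)
Definition Zd (d : nat) : Type := { k : list Z | length k = d }.

(* Sequences of Fourier coefficients indexed by Z^d. *)
Definition vec (d : nat) : Type := Zd d -> CC.
Definition vzero {d} : vec d := fun _ => C0.
Definition vadd {d} (x y : vec d) : vec d := fun k => Cadd (x k) (y k).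
Definition vscale {d} (c : CC) (x : vec d) : vec d := fun k => Cmul c (x k).
Definition vsub {d} (x y : vec d) : vec d := fun k => Cadd (x k) (Copp (y k)).

Definition fsum {A : Type} (f : A -> R) (l : list A) : R :=
  fold_right (fun a s => f a + s) 0 l.

(* t^p with the convention 0^p = 0 (p > 0). *)
Definition rpow0 (t p : R) : R :=
  if Req_EM_T t 0 then 0 else Rpower t p.

Definition weight (Rs : list R) (k : list Z) : R :=
  1 + fold_right (fun p s => rpow0 (IZR (Z.abs (fst p))) (2 * snd p) + s) 0
        (combine k Rs).

Definition W_partial (Rs : list R) {d} (x : vec d) (l : list (Zd d)) : R :=
  fsum (fun k => weight Rs (proj1_sig k) * Cnorm2 (x k)) l.

Definition L2_partial {d} (y : vec d) (l : list (Zd d)) : R :=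
  fsum (fun k => Cnorm2 (y k)) l.

Definition in_W (Rs : list R) (d : nat) (x : vec d) : Prop :=
  exists M, forall l, NoDup l -> W_partial Rs x l <= M.

(* membership in L_2(T^d) (Fourier side, Parseval) *)
Definition in_L2 (d : nat) (y : vec d) : Prop :=
  exists M, forall l, NoDup l -> L2_partial y l <= M.

Definition W_unit_ball (Rs : list R) (d : nat) (x : vec d) : Prop :=
  forall l, NoDup l -> W_partial Rs x l <= 1.

Definition L2_norm_is (d : nat) (y : vec d) (r : R) : Prop :=
  0 <= r /\ is_lub (fun t => exists l, NoDup l /\ t = L2_partial y l) (r * r).

Definition linear_on (Rs : list R) (d : nat) (A : vec d -> vec d) : Prop :=
  (forall x, in_W Rs d x -> in_L2 d (A x)) /\
  (forall x y, in_W Rs d x -> in_W Rs d y -> A (vadd x y) = vadd (A x) (A y)) /\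
  (forall c x, in_W Rs d x -> A (vscale c x) = vscale c (A x)).

Definition lincomb {d} (cs : list CC) (ys : list (vec d)) : vec d :=
  fold_right (fun p acc => vadd (vscale (fst p) (snd p)) acc) vzero (combine cs ys).

Definition rank_lt (Rs : list R) (d : nat) (A : vec d -> vec d) (n : nat) : Prop :=
  exists ys : list (vec d), length ys = (n - 1)%nat /\ Forall (in_L2 d) ys /\
    forall x, in_W Rs d x -> exists cs : list CC, length cs = length ys /\ A x = lincomb cs ys.

Definition op_norm_diff_is (Rs : list R) (d : nat) (A : vec d -> vec d) (s : R) : Prop :=
  is_lub (fun r => exists x, W_unit_ball Rs d x /\ L2_norm_is d (vsub x (A x)) r) s.

Definition is_glb (E : R -> Prop) (m : R) : Prop :=
  (forall x, E x -> m <= x) /\ (forall b, (forall x, E x -> b <= x) -> b <= m).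

Definition approx_number_is (Rs : list R) (d n : nat) (a : R) : Prop :=
  is_glb (fun s => exists A : vec d -> vec d,
             linear_on Rs d A /\ rank_lt Rs d A n /\ op_norm_diff_is Rs d A s) a.

Definition log2 (x : R) : R := ln x / ln 2.

Definition gR (Rs : list R) : R := / fold_right (fun r s => / r + s) 0 Rs.

Definition phi (Rs : list R) (d n : nat) : R :=
  if (n <=? d)%nat then 1
  else if (n <=? 3 ^ d)%nat then
    sqrt (log2 (1 + INR d / log2 (INR n)) / log2 (INR n))
  else / sqrt (INR d) * Rpower (INR n) (- gR Rs).

(* Main.v *)
Require Import Defs.
From Stdlib Require Import Reals List Lra Lia Psatz ZArith Arith.
From Stdlib Require Import FunctionalExtensionality Classical Eqdep_dec.
Import ListNotations.
Open Scope R_scope.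

Definition Cone : CC := (1, 0).
Definition Csub (a b : CC) : CC := Cadd a (Copp b).
Definition Cinv (a : CC) : CC :=
  (fst a / (fst a * fst a + snd a * snd a), - snd a / (fst a * fst a + snd a * snd a)).
Definition Cdiv (a b : CC) : CC := Cmul a (Cinv b).

Lemma CC_ring : ring_theory C0 Cone Cadd Cmul Csub Copp (@eq CC).
Proof.
  constructor; intros;
  repeat match goal with p : CC |- _ => destruct p end;
  unfold Csub, Cadd, Cmul, Copp, C0, Cone; simpl; f_equal; ring.
Qed.

Lemma CC_field : field_theory C0 Cone Cadd Cmul Csub Copp Cdiv Cinv (@eq CC).
Proof.
  constructor.
  - exact CC_ring.
  - unfold Cone, C0; intro H; inversion H; lra.
  - reflexivity.
  - intros [a b] H. unfold Cinv, Cmul, Cone; simpl.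
    assert (Hn : a * a + b * b <> 0).
    { intro H0. apply H. assert (a = 0) by nra. assert (b = 0) by nra. subst. reflexivity. }
    f_equal; field; auto.
Qed.

Add Field CCfield : CC_field.

Lemma Cnorm2_nonneg a : 0 <= Cnorm2 a.
Proof. unfold Cnorm2; nra. Qed.

Lemma Cnorm2_pos a : a <> C0 -> 0 < Cnorm2 a.
Proof.
  destruct a as [x y]; unfold Cnorm2, C0; simpl; intro H.
  destruct (Req_dec x 0); destruct (Req_dec y 0); subst; try nra. now elim H.
Qed.

Fixpoint csum (n : nat) (f : nat -> CC) : CC :=
  match n with O => C0 | S n => Cadd (csum n f) (f n) end.

Lemma csum_ext n f g : (forall i, (i < n)%nat -> f i = g i) -> csum n f = csum n g.
Proof.
  induction n; simpl; intros H; auto.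
  rewrite IHn by (intros; apply H; lia). rewrite H by lia. auto.
Qed.

Lemma csum_add n f g : csum n (fun i => Cadd (f i) (g i)) = Cadd (csum n f) (csum n g).
Proof. induction n; simpl. unfold C0, Cadd; simpl; f_equal; ring. rewrite IHn. ring. Qed.

Lemma csum_mul_l n c f : csum n (fun i => Cmul c (f i)) = Cmul c (csum n f).
Proof. induction n; simpl. unfold C0, Cmul; simpl; f_equal; ring. rewrite IHn. ring. Qed.

Lemma csum_opp n f : csum n (fun i => Copp (f i)) = Copp (csum n f).
Proof. induction n; simpl. unfold C0, Copp; simpl; f_equal; ring. rewrite IHn. ring. Qed.

Lemma csum_zero n f : (forall i, (i < n)%nat -> f i = C0) -> csum n f = C0.
Proof.
  intros H; induction n; simpl; auto.
  rewrite IHn by (intros; apply H; lia). rewrite H by lia. ring.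
Qed.

Lemma csum_shift n f : csum (S n) f = Cadd (f O) (csum n (fun i => f (S i))).
Proof.
  induction n; simpl in *. ring. rewrite IHn. ring.
Qed.

Lemma csum_swap n m F :
  csum n (fun i => csum m (fun j => F i j)) = csum m (fun j => csum n (fun i => F i j)).
Proof.
  induction n; simpl.
  - symmetry; apply csum_zero; auto.
  - rewrite IHn. rewrite <- csum_add. reflexivity.
Qed.

Lemma csum_delta n f i : (i < n)%nat -> (forall k, (k < n)%nat -> k <> i -> f k = C0) ->
  csum n f = f i.
Proof.
  induction n; intros Hi H; [lia|]. simpl.
  destruct (Nat.eq_dec i n).
  - subst. rewrite csum_zero. ring. intros; apply H; lia.
  - rewrite IHn by (try lia; intros; apply H; lia). rewrite (H n) by lia. ring.
Qed.

Definition skip (i0 i : nat) : nat := if (i <? i0)%nat then i else S i.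

Lemma skip_neq i0 i : skip i0 i <> i0.
Proof. unfold skip; destruct (Nat.ltb_spec i i0); lia. Qed.

Lemma skip_lt i0 i n : (i < n)%nat -> (skip i0 i < S n)%nat.
Proof. unfold skip; destruct (Nat.ltb_spec i i0); lia. Qed.

Lemma csum_skip n f i0 : (i0 < S n)%nat ->
  csum (S n) f = Cadd (f i0) (csum n (fun i => f (skip i0 i))).
Proof.
  revert i0; induction n; intros i0 Hi.
  - simpl. assert (i0 = O) by lia; subst. ring.
  - destruct (Nat.eq_dec i0 (S n)).
    + subst. change (csum (S (S n)) f) with (Cadd (csum (S n) f) (f (S n))).
      rewrite (csum_ext (S n) (fun i => f (skip (S n) i)) f).
      ring. intros i Hi'. unfold skip. destruct (Nat.ltb_spec i (S n)); auto; lia.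
    + change (csum (S (S n)) f) with (Cadd (csum (S n) f) (f (S n))).
      rewrite (IHn i0) by lia.
      change (csum (S n) (fun i => f (skip i0 i))) with
        (Cadd (csum n (fun i => f (skip i0 i))) (f (skip i0 n))).
      replace (skip i0 n) with (S n). ring.
      unfold skip. destruct (Nat.ltb_spec n i0); lia.
Qed.

Lemma kernel_lemma : forall m n (V : nat -> nat -> CC), (m < n)%nat ->
  exists b : nat -> CC, (exists i, (i < n)%nat /\ b i <> C0) /\
    forall j, (j < m)%nat -> csum n (fun i => Cmul (b i) (V i j)) = C0.
Proof.
  induction m; intros n V Hmn.
  - exists (fun _ => Cone). split. exists O. split. lia. unfold Cone, C0. intro H; inversion H; lra.
    intros; lia.
  - destruct (classic (forall i, (i < n)%nat -> V i m = C0)) as [Hz|Hnz].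
    + destruct (IHm n V) as [b [Hb Hk]]; [lia|].
      exists b; split; auto. intros j Hj. destruct (Nat.eq_dec j m).
      * subst. apply csum_zero. intros i Hi. rewrite Hz by auto. ring.
      * apply Hk; lia.
    + apply not_all_ex_not in Hnz. destruct Hnz as [i0 Hi0].
      apply imply_to_and in Hi0. destruct Hi0 as [Hi0n Hp].
      destruct n as [|n']; [lia|].
      set (p := V i0 m).
      set (c := fun i => Cdiv (V (skip i0 i) m) p).
      set (V' := fun i j => Csub (V (skip i0 i) j) (Cmul (c i) (V i0 j))).
      destruct (IHm n' V') as [b' [[i1 [Hi1 Hb1]] Hk]]; [lia|].
      set (beta := csum n' (fun i => Cmul (b' i) (c i))).
      set (b := fun i => if Nat.eq_dec i i0 then Copp beta
                         else b' (if (i <? i0)%nat then i else pred i)).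
      assert (Hbs : forall i, b (skip i0 i) = b' i).
      { intro i. unfold b. destruct (Nat.eq_dec (skip i0 i) i0).
        - exfalso; eapply skip_neq; eauto.
        - f_equal. unfold skip. destruct (Nat.ltb_spec i i0).
          + destruct (Nat.ltb_spec i i0); lia.
          + destruct (Nat.ltb_spec (S i) i0); lia. }
      exists b. split.
      * exists (skip i0 i1). split. apply skip_lt; auto. rewrite Hbs; auto.
      * intros j Hj.
        rewrite (csum_skip n' _ i0) by lia.
        rewrite (csum_ext n' _ (fun i => Cadd (Cmul (b' i) (V' i j)) (Cmul (Cmul (b' i) (c i)) (V i0 j)))).
        2:{ intros i Hi. rewrite Hbs. unfold V'. ring. }
        rewrite csum_add.
        assert (HV : csum n' (fun i => Cmul (b' i) (V' i j)) = C0).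
        { destruct (Nat.eq_dec j m).
          - subst j. apply csum_zero. intros i Hi. unfold V', c, Cdiv.
            replace (V i0 m) with p by reflexivity.
            field. exact Hp.
          - apply Hk; lia. }
        rewrite HV.
        rewrite (csum_ext n' (fun i => Cmul (Cmul (b' i) (c i)) (V i0 j))
                   (fun i => Cmul (V i0 j) (Cmul (b' i) (c i)))) by (intros; ring).
        rewrite csum_mul_l. fold beta.
        unfold b. destruct (Nat.eq_dec i0 i0); [|congruence]. ring.
Qed.

Definition Zd_eq_dec {d} (a b : Zd d) : {a = b} + {a <> b}.
Proof.
  destruct a as [k1 h1], b as [k2 h2].
  destruct (list_eq_dec Z.eq_dec k1 k2) as [e|n].
  - subst. left. f_equal. apply (UIP_dec Nat.eq_dec).
  - right. intro H. inversion H. auto.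
Defined.

Definition zd0 (d : nat) : Zd d := exist _ (repeat 0%Z d) (repeat_length 0%Z d).

Definition evec {d} (k : Zd d) : vec d := fun j => if Zd_eq_dec j k then Cone else C0.

Lemma fsum_app {A} (f : A -> R) l1 l2 : fsum f (l1 ++ l2) = fsum f l1 + fsum f l2.
Proof. induction l1; simpl; [ring| rewrite IHl1; ring]. Qed.

Lemma fsum_le {A} (f g : A -> R) l : (forall a, In a l -> f a <= g a) -> fsum f l <= fsum g l.
Proof.
  induction l; simpl; intros H. lra.
  assert (f a <= g a) by auto. assert (fsum f l <= fsum g l) by auto. lra.
Qed.

Lemma fsum_nonneg {A} (f : A -> R) l : (forall a, In a l -> 0 <= f a) -> 0 <= fsum f l.
Proof.
  induction l; simpl; intros H. lra.
  assert (0 <= f a) by auto. assert (0 <= fsum f l) by auto. lra.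
Qed.

Lemma fsum_scal {A} (f : A -> R) c l : fsum (fun a => c * f a) l = c * fsum f l.
Proof. induction l; simpl; [ring| rewrite IHl; ring]. Qed.

Lemma fsum_plus {A} (f g : A -> R) l : fsum (fun a => f a + g a) l = fsum f l + fsum g l.
Proof. induction l; simpl; [ring| rewrite IHl; ring]. Qed.

Lemma fsum_ext {A} (f g : A -> R) l : (forall a, In a l -> f a = g a) -> fsum f l = fsum g l.
Proof.
  induction l; simpl; intros H; auto. rewrite H by auto. rewrite IHl by auto. auto.
Qed.

Lemma fsum_zero {A} (f : A -> R) l : (forall a, In a l -> f a = 0) -> fsum f l = 0.
Proof. induction l; simpl; intros H; auto. rewrite H by auto. rewrite IHl. ring. intros; apply H; auto. Qed.

Lemma fsum_supp {d} (f : Zd d -> R) l T :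
  (forall a, 0 <= f a) -> NoDup l -> NoDup T ->
  (forall k, In k l -> ~ In k T -> f k = 0) -> fsum f l <= fsum f T.
Proof.
  revert T; induction l as [|a l IH]; intros T Hf Hl HT Hs; simpl.
  - apply fsum_nonneg; auto.
  - inversion Hl; subst.
    destruct (in_dec Zd_eq_dec a T) as [Hin|Hnin].
    + destruct (in_split _ _ Hin) as [T1 [T2 ->]].
      rewrite fsum_app. simpl.
      assert (fsum f l <= fsum f (T1 ++ T2)).
      { apply IH; auto. eapply NoDup_remove_1; eauto.
        intros k Hk Hn. apply Hs; simpl; auto. intro H'. apply in_app_or in H'.
        destruct H' as [H'|[H'|H']]; subst; auto; apply Hn; apply in_or_app; auto. }
      rewrite fsum_app in H. lra.
    + rewrite Hs by (simpl; auto).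
      assert (fsum f l <= fsum f T) by (apply IH; auto; intros; apply Hs; simpl; auto). lra.
Qed.

Fixpoint rsum (n : nat) (f : nat -> R) : R :=
  match n with O => 0 | S n => rsum n f + f n end.

Lemma rsum_ext n f g : (forall i, (i < n)%nat -> f i = g i) -> rsum n f = rsum n g.
Proof.
  induction n; simpl; intros H; auto.
  rewrite IHn by (intros; apply H; lia). rewrite H by lia. auto.
Qed.

Lemma rsum_le n f g : (forall i, (i < n)%nat -> f i <= g i) -> rsum n f <= rsum n g.
Proof.
  induction n; simpl; intros H. lra.
  assert (rsum n f <= rsum n g) by (apply IHn; intros; apply H; lia).
  assert (f n <= g n) by (apply H; lia). lra.
Qed.

Lemma rsum_scal n c f : rsum n (fun i => c * f i) = c * rsum n f.
Proof. induction n; simpl; [ring| rewrite IHn; ring]. Qed.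

Lemma rsum_pos n f i : (forall j, (j < n)%nat -> 0 <= f j) -> (i < n)%nat -> 0 < f i ->
  0 < rsum n f.
Proof.
  induction n; intros H Hi Hp; [lia|]. simpl.
  assert (0 <= rsum n f).
  { clear IHn Hi Hp. induction n; simpl. lra.
    assert (0 <= f n) by (apply H; lia). assert (0 <= rsum n f) by (apply IHn; intros; apply H; lia). lra. }
  destruct (Nat.eq_dec i n).
  - subst. lra.
  - assert (0 < rsum n f) by (apply IHn; auto; lia). assert (0 <= f n) by (apply H; lia). lra.
Qed.

Lemma rsum_shift n g : rsum (S n) g = g O + rsum n (fun i => g (S i)).
Proof. induction n; simpl in *. ring. rewrite IHn. ring. Qed.

Lemma fsum_nth {A} (f : A -> R) (l : list A) (d0 : A) :
  fsum f l = rsum (length l) (fun i => f (nth i l d0)).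
Proof.
  induction l as [|a l IH]. reflexivity.
  change (fsum f (a :: l)) with (f a + fsum f l).
  change (length (a :: l)) with (S (length l)).
  rewrite rsum_shift, IH. reflexivity.
Qed.

Lemma rpow0_nonneg t p : 0 <= rpow0 t p.
Proof. unfold rpow0. destruct (Req_EM_T t 0). lra. unfold Rpower. left; apply exp_pos. Qed.

Lemma fold_w_nonneg (l : list (Z * R)) :
  0 <= fold_right (fun p s => rpow0 (IZR (Z.abs (fst p))) (2 * snd p) + s) 0 l.
Proof. induction l; simpl. lra. pose proof (rpow0_nonneg (IZR (Z.abs (fst a))) (2 * snd a)). lra. Qed.

Lemma weight_ge1 Rs k : 1 <= weight Rs k.
Proof. unfold weight. pose proof (fold_w_nonneg (combine k Rs)). lra. Qed.

Lemma lincomb_pt {d} (cs : list CC) (ys : list (vec d)) j : length cs = length ys ->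
  lincomb cs ys j = csum (length ys) (fun i => Cmul (nth i cs C0) (nth i ys vzero j)).
Proof.
  revert ys; induction cs as [|c cs IH]; intros [|y ys] Hl; try (simpl in Hl; lia).
  - reflexivity.
  - change (length (y :: ys)) with (S (length ys)).
    rewrite csum_shift. simpl. unfold lincomb in IH. rewrite <- IH by (simpl in Hl; lia).
    unfold vadd, vscale. reflexivity.
Qed.

Lemma Cnorm2_add a b : Cnorm2 (Cadd a b) <= 2 * Cnorm2 a + 2 * Cnorm2 b.
Proof. destruct a as [a1 a2], b as [b1 b2]; unfold Cnorm2, Cadd; simpl.
  pose proof (Rle_0_sqr (a1 - b1)); pose proof (Rle_0_sqr (a2 - b2)); unfold Rsqr in *; nra. Qed.

Lemma Cnorm2_mul a b : Cnorm2 (Cmul a b) = Cnorm2 a * Cnorm2 b.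
Proof. destruct a, b; unfold Cnorm2, Cmul; simpl. ring. Qed.

Lemma Cnorm2_C0 : Cnorm2 C0 = 0.
Proof. unfold Cnorm2, C0; simpl; ring. Qed.

Lemma in_W_vzero Rs d : in_W Rs d vzero.
Proof.
  exists 0. intros l _. unfold W_partial. rewrite fsum_zero. lra.
  intros. unfold vzero. rewrite Cnorm2_C0. ring.
Qed.

Lemma in_W_vadd Rs d x y : in_W Rs d x -> in_W Rs d y -> in_W Rs d (vadd x y).
Proof.
  intros [M1 H1] [M2 H2]. exists (2 * M1 + 2 * M2). intros l Hl.
  specialize (H1 l Hl). specialize (H2 l Hl). unfold W_partial in *.
  apply Rle_trans with (fsum (fun k => 2 * (weight Rs (proj1_sig k) * Cnorm2 (x k))
                                   + 2 * (weight Rs (proj1_sig k) * Cnorm2 (y k))) l).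
  - apply fsum_le. intros a _. unfold vadd.
    pose proof (Cnorm2_add (x a) (y a)). pose proof (weight_ge1 Rs (proj1_sig a)). nra.
  - rewrite fsum_plus, !fsum_scal. lra.
Qed.

Lemma in_W_vscale Rs d c x : in_W Rs d x -> in_W Rs d (vscale c x).
Proof.
  intros [M H]. exists (Cnorm2 c * M). intros l Hl. specialize (H l Hl). unfold W_partial in *.
  rewrite (fsum_ext _ (fun k => Cnorm2 c * (weight Rs (proj1_sig k) * Cnorm2 (x k)))).
  rewrite fsum_scal. pose proof (Cnorm2_nonneg c). nra.
  intros a _. unfold vscale. rewrite Cnorm2_mul. ring.
Qed.

Lemma in_W_lincomb Rs d cs xs : Forall (in_W Rs d) xs -> in_W Rs d (lincomb cs xs).
Proof.
  revert xs; induction cs as [|c cs IH]; intros [|x xs] HF; simpl; try apply in_W_vzero.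
  inversion HF; subst. apply in_W_vadd. apply in_W_vscale; auto. apply IH; auto.
Qed.

Lemma linear_vzero Rs d A : linear_on Rs d A -> A vzero = vzero.
Proof.
  intros [_ [_ Hs]].
  assert (E : vzero = vscale C0 (@vzero d)).
  { apply functional_extensionality; intro k. unfold vscale, vzero. ring. }
  rewrite E, Hs by apply in_W_vzero.
  apply functional_extensionality; intro k. unfold vscale, vzero. ring.
Qed.

Lemma linear_lincomb Rs d A cs xs : linear_on Rs d A -> Forall (in_W Rs d) xs ->
  A (lincomb cs xs) = lincomb cs (map A xs).
Proof.
  intros HA. revert xs; induction cs as [|c cs IH]; intros [|x xs] HF; simpl;
    try apply (linear_vzero _ _ _ HA).
  inversion HF; subst. destruct HA as [H0 [Ha Hs]].
  change (A (vadd (vscale c x) (lincomb cs xs)) = vadd (vscale c (A x)) (lincomb cs (map A xs))).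
  rewrite Ha. rewrite Hs by auto. f_equal. apply IH; auto.
  apply in_W_vscale; auto. apply in_W_lincomb; auto.
Qed.

Lemma nth_map_indep {X Y} (f : X -> Y) (l : list X) dflt d0 i : (i < length l)%nat ->
  nth i (map f l) dflt = f (nth i l d0).
Proof.
  intros H. rewrite nth_indep with (d' := f d0) by (rewrite length_map; lia). apply map_nth.
Qed.


Lemma fin_choice {B} (b0 : B) n (P : nat -> B -> Prop) :
  (forall i, (i < n)%nat -> exists y, P i y) -> exists f, forall i, (i < n)%nat -> P i (f i).
Proof.
  induction n; intros H.
  - exists (fun _ => b0). intros; lia.
  - destruct IHn as [f Hf]. intros; apply H; lia.
    destruct (H n) as [y Hy]. lia.
    exists (fun i => if Nat.eq_dec i n then y else f i). intros i Hi.
    destruct (Nat.eq_dec i n). subst; auto. apply Hf; lia.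
Qed.

Lemma evec_supp {d} (k j : Zd d) : ~ In j [k] -> evec k j = C0.
Proof. intros H. unfold evec. destruct (Zd_eq_dec j k). subst; elim H; simpl; auto. auto. Qed.

Lemma in_W_evec Rs d (k : Zd d) : in_W Rs d (evec k).
Proof.
  exists (fsum (fun j => weight Rs (proj1_sig j) * Cnorm2 (evec k j)) [k]).
  intros l Hl. unfold W_partial. apply fsum_supp; auto.
  - intros a. pose proof (weight_ge1 Rs (proj1_sig a)). pose proof (Cnorm2_nonneg (evec k a)). nra.
  - constructor. simpl; auto. constructor.
  - intros j _ Hj. rewrite evec_supp by auto. rewrite Cnorm2_C0. ring.
Qed.

Lemma in_L2_evec d (k : Zd d) : in_L2 d (evec k).
Proof.
  exists (fsum (fun j => Cnorm2 (evec k j)) [k]).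
  intros l Hl. unfold L2_partial. apply fsum_supp; auto.
  - intros a. apply Cnorm2_nonneg.
  - constructor. simpl; auto. constructor.
  - intros j _ Hj. rewrite evec_supp by auto. apply Cnorm2_C0.
Qed.

Lemma in_L2_vzero d : in_L2 d vzero.
Proof.
  exists 0. intros l _. unfold L2_partial. rewrite fsum_zero. lra.
  intros. unfold vzero. apply Cnorm2_C0.
Qed.

Lemma sqrt_ge_inv tau r2 : 0 < tau -> / tau <= r2 -> / sqrt tau <= sqrt r2.
Proof.
  intros Ht H. rewrite <- sqrt_inv. apply sqrt_le_1_alt. auto.
Qed.

Lemma lower_an Rs d n (T : list (Zd d)) tau A s :
  (1 <= n)%nat -> NoDup T -> length T = n -> 0 < tau ->
  (forall k, In k T -> weight Rs (proj1_sig k) <= tau) ->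
  linear_on Rs d A -> rank_lt Rs d A n -> op_norm_diff_is Rs d A s -> / sqrt tau <= s.
Proof.
  intros Hn HT HTl Htau Hw HA [ys [Hys [HyL Hspan]]] Hs.
  set (Tn := fun i => nth i T (zd0 d)).
  assert (HeW : forall i, in_W Rs d (evec (Tn i))) by (intros; apply in_W_evec).
  destruct (fin_choice [] n (fun i cs => length cs = length ys /\ A (evec (Tn i)) = lincomb cs ys))
    as [css Hcss].
  { intros i Hi. apply Hspan. apply HeW. }
  set (V := fun i j => nth j (css i) C0).
  destruct (kernel_lemma (n-1) n V) as [b [[i1 [Hi1 Hb1]] Hker]]; [lia|].
  set (N := rsum n (fun i => weight Rs (proj1_sig (Tn i)) * Cnorm2 (b i))).
  assert (HN : 0 < N).
  { apply rsum_pos with i1; auto.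
    - intros j _. pose proof (weight_ge1 Rs (proj1_sig (Tn j))). pose proof (Cnorm2_nonneg (b j)). nra.
    - pose proof (weight_ge1 Rs (proj1_sig (Tn i1))). pose proof (Cnorm2_pos _ Hb1). nra. }
  set (sc := (/ sqrt N, 0) : CC).
  set (bt := fun i => Cmul sc (b i)).
  assert (Hker' : forall j, (j < n - 1)%nat -> csum n (fun i => Cmul (bt i) (V i j)) = C0).
  { intros j Hj. rewrite (csum_ext _ _ (fun i => Cmul sc (Cmul (b i) (V i j)))) by (intros; unfold bt; ring).
    rewrite csum_mul_l, Hker by auto. ring. }
  assert (HbtN : forall i, Cnorm2 (bt i) = / N * Cnorm2 (b i)).
  { intro i. unfold bt. rewrite Cnorm2_mul. f_equal. unfold sc, Cnorm2; simpl.
    rewrite <- Rinv_mult. rewrite sqrt_sqrt by lra. ring_simplify. auto. }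
  set (x0 := lincomb (map bt (seq 0 n)) (map evec T)).
  assert (Hx0 : forall k, x0 k = csum n (fun i => Cmul (bt i) (evec (Tn i) k))).
  { intro k. unfold x0. rewrite lincomb_pt by (rewrite !length_map, length_seq; auto).
    rewrite length_map, HTl. apply csum_ext. intros i Hi. f_equal.
    - rewrite nth_indep with (d' := bt O) by (rewrite length_map, length_seq; lia).
      rewrite map_nth, seq_nth; auto.
    - rewrite nth_indep with (d' := evec (zd0 d)) by (rewrite length_map; lia).
      rewrite map_nth. reflexivity. }
  assert (Hx0T : forall i, (i < n)%nat -> x0 (Tn i) = bt i).
  { intros i Hi. rewrite Hx0. rewrite csum_delta with (i := i); auto.
    - unfold evec. destruct Zd_eq_dec; [ring| congruence].
    - intros k Hk Hki. unfold evec. destruct Zd_eq_dec as [e|]; [|ring].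
      exfalso. apply Hki. unfold Tn in e. apply (proj1 (NoDup_nth T (zd0 d)) HT); auto; lia. }
  assert (Hx0n : forall k, ~ In k T -> x0 k = C0).
  { intros k Hk. rewrite Hx0. apply csum_zero. intros i Hi. unfold evec.
    destruct Zd_eq_dec as [e|]; [|ring]. subst. elim Hk. apply nth_In; lia. }
  assert (HFe : Forall (in_W Rs d) (map evec T)).
  { apply Forall_forall. intros x Hx. apply in_map_iff in Hx. destruct Hx as [k [<- _]]. apply in_W_evec. }
  assert (HAx : A x0 = vzero).
  { unfold x0. rewrite (linear_lincomb Rs d A) by auto.
    apply functional_extensionality; intro j.
    rewrite lincomb_pt by (rewrite !length_map, length_seq; auto).
    rewrite !length_map, HTl.
    rewrite (csum_ext n _ (fun i => csum (n-1) (fun l => Cmul (Cmul (bt i) (V i l)) (nth l ys vzero j)))).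
    2:{ intros i Hi.
        rewrite (nth_map_indep _ _ _ O) by (rewrite length_seq; lia).
        rewrite seq_nth by auto. simpl.
        rewrite (nth_map_indep _ _ _ (evec (zd0 d))) by (rewrite length_map; lia).
        rewrite (nth_map_indep _ _ _ (zd0 d)) by lia. fold (Tn i).
        destruct (Hcss i Hi) as [Hl Heq]. rewrite Heq. rewrite lincomb_pt by auto.
        rewrite Hys. rewrite <- csum_mul_l. apply csum_ext; intros; unfold V; ring. }
    rewrite csum_swap. change (@vzero d j) with C0. apply csum_zero. intros l Hl.
    rewrite (csum_ext n _ (fun i => Cmul (nth l ys vzero j) (Cmul (bt i) (V i l))))  by (intros; ring).
    rewrite csum_mul_l, Hker' by lia. ring. }
  assert (Hsum1 : rsum n (fun i => weight Rs (proj1_sig (Tn i)) * Cnorm2 (bt i)) = 1).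
  { rewrite (rsum_ext _ _ (fun i => / N * (weight Rs (proj1_sig (Tn i)) * Cnorm2 (b i)))).
    rewrite rsum_scal. fold N. field. lra.
    intros; rewrite HbtN; ring. }
  assert (Hball : W_unit_ball Rs d x0).
  { intros l Hl. unfold W_partial.
    apply Rle_trans with (fsum (fun k => weight Rs (proj1_sig k) * Cnorm2 (x0 k)) T).
    - apply fsum_supp; auto.
      + intros a. pose proof (weight_ge1 Rs (proj1_sig a)). pose proof (Cnorm2_nonneg (x0 a)). nra.
      + intros k _ Hk. rewrite Hx0n by auto. rewrite Cnorm2_C0. ring.
    - rewrite (fsum_nth _ _ (zd0 d)). rewrite HTl. rewrite <- Hsum1. right.
      apply rsum_ext. intros i Hi. fold (Tn i). rewrite Hx0T; auto. }
  set (r2 := rsum n (fun i => Cnorm2 (bt i))).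
  assert (Hr2 : 0 <= r2).
  { unfold r2. apply Rle_trans with (rsum n (fun _ => 0)).
    clear. induction n; simpl; lra. apply rsum_le. intros; apply Cnorm2_nonneg. }
  assert (Hsub : vsub x0 (A x0) = x0).
  { rewrite HAx. apply functional_extensionality; intro k. unfold vsub, vzero. ring. }
  assert (HL2 : L2_norm_is d (vsub x0 (A x0)) (sqrt r2)).
  { rewrite Hsub. split. apply sqrt_pos. rewrite sqrt_sqrt by auto.
    assert (HT2 : L2_partial x0 T = r2).
    { unfold L2_partial. rewrite (fsum_nth _ _ (zd0 d)). rewrite HTl. apply rsum_ext.
      intros i Hi. fold (Tn i). rewrite Hx0T; auto. }
    split.
    - intros y [l [Hl ->]]. rewrite <- HT2. unfold L2_partial. apply fsum_supp; auto.
      + intros; apply Cnorm2_nonneg.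
      + intros k _ Hk. rewrite Hx0n by auto. apply Cnorm2_C0.
    - intros bnd Hb. apply Hb. exists T. split; auto. }
  assert (Hr2t : / tau <= r2).
  { apply Rle_trans with (rsum n (fun i => / tau * (weight Rs (proj1_sig (Tn i)) * Cnorm2 (bt i)))).
    - rewrite rsum_scal, Hsum1. lra.
    - apply rsum_le. intros i Hi. pose proof (Cnorm2_nonneg (bt i)).
      assert (weight Rs (proj1_sig (Tn i)) <= tau) by (apply Hw; apply nth_In; lia).
      apply Rle_trans with (/ tau * (tau * Cnorm2 (bt i))).
      + apply Rmult_le_compat_l. left; apply Rinv_0_lt_compat; lra. apply Rmult_le_compat_r; lra.
      + right. field. lra. }
  apply Rle_trans with (sqrt r2).
  - apply sqrt_ge_inv; auto.
  - apply (proj1 Hs). exists x0. split; auto.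
Qed.

Definition projS {d} (S : list (Zd d)) (x : vec d) : vec d :=
  fun k => if in_dec Zd_eq_dec k S then x k else C0.

Lemma upper_an Rs d n (S : list (Zd d)) t :
  (1 <= n)%nat -> NoDup S -> (length S <= n - 1)%nat -> 0 < t ->
  (forall k, ~ In k S -> t <= weight Rs (proj1_sig k)) ->
  exists s, (exists A, linear_on Rs d A /\ rank_lt Rs d A n /\ op_norm_diff_is Rs d A s)
    /\ s <= / sqrt t.
Proof.
  intros Hn HS HSl Ht Hw.
  set (P := projS S).
  assert (Hlin : linear_on Rs d P).
  { split; [|split].
    - intros x _. exists (fsum (fun k => Cnorm2 (P x k)) S). intros l Hl.
      unfold L2_partial. apply fsum_supp; auto. intros; apply Cnorm2_nonneg.
      intros k _ Hk. unfold P, projS. destruct in_dec; [contradiction|]. apply Cnorm2_C0.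
    - intros x y _ _. apply functional_extensionality; intro k. unfold P, projS, vadd.
      destruct in_dec; auto. unfold Cadd, C0; simpl; f_equal; ring.
    - intros c x _. apply functional_extensionality; intro k. unfold P, projS, vscale.
      destruct in_dec; auto. unfold Cmul, C0; simpl; f_equal; ring. }
  assert (Hrank : rank_lt Rs d P n).
  { set (m := (n - 1 - length S)%nat).
    exists (map evec S ++ repeat vzero m). split; [|split].
    - rewrite length_app, length_map, repeat_length. unfold m; lia.
    - apply Forall_app. split.
      + apply Forall_forall. intros y Hy. apply in_map_iff in Hy. destruct Hy as [k [<- _]]. apply in_L2_evec.
      + apply Forall_forall. intros y Hy. apply repeat_spec in Hy. subst. apply in_L2_vzero.
    - intros x _. exists (map x S ++ repeat C0 m). split.
      + rewrite !length_app, !length_map, !repeat_length. auto.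
      + apply functional_extensionality; intro j.
        rewrite lincomb_pt by (rewrite !length_app, !length_map, !repeat_length; auto).
        rewrite length_app, length_map, repeat_length.
        assert (Hnth : forall i, (i < length S + m)%nat ->
                  Cmul (nth i (map x S ++ repeat C0 m) C0) (nth i (map evec S ++ repeat vzero m) vzero j)
                  = if (i <? length S)%nat then Cmul (x (nth i S (zd0 d))) (evec (nth i S (zd0 d)) j) else C0).
        { intros i Hi. destruct (Nat.ltb_spec i (length S)).
          - rewrite !app_nth1 by (rewrite length_map; lia).
            rewrite (nth_map_indep _ _ _ (zd0 d)) by lia.
            rewrite (nth_map_indep _ _ _ (zd0 d)) by lia. reflexivity.
          - rewrite !app_nth2 by (rewrite length_map; lia).
            rewrite nth_repeat. ring. }
        rewrite (csum_ext _ _ _ Hnth).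
        unfold P, projS. destruct (in_dec Zd_eq_dec j S) as [Hj|Hj].
        * destruct (In_nth S j (zd0 d) Hj) as [i0 [Hi0 Heq]].
          rewrite csum_delta with (i := i0); [| lia |].
          -- destruct (Nat.ltb_spec i0 (length S)); [|lia]. rewrite Heq. unfold evec.
             destruct Zd_eq_dec; [ring|congruence].
          -- intros k Hk Hki. destruct (Nat.ltb_spec k (length S)); [|auto].
             unfold evec. destruct Zd_eq_dec as [e|]; [|ring]. exfalso. apply Hki.
             apply (proj1 (NoDup_nth S (zd0 d)) HS); auto. congruence.
        * symmetry. apply csum_zero. intros i Hi. destruct (Nat.ltb_spec i (length S)); [|auto].
          unfold evec. destruct Zd_eq_dec as [e|]; [|ring]. exfalso. apply Hj. rewrite e. apply nth_In; auto. }
  set (E := fun r => exists x, W_unit_ball Rs d x /\ L2_norm_is d (vsub x (P x)) r).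
  assert (Hbnd : forall r, E r -> r <= / sqrt t).
  { intros r [x [Hb [Hr0 Hr]]].
    assert (r * r <= / t).
    { apply (proj2 Hr). intros y [l [Hl ->]]. unfold L2_partial.
      apply Rle_trans with (fsum (fun k => / t * (weight Rs (proj1_sig k) * Cnorm2 (x k))) l).
      - apply fsum_le. intros k _. unfold vsub, P, projS.
        destruct in_dec as [Hk|Hk].
        + replace (Cadd (x k) (Copp (x k))) with C0 by ring. rewrite Cnorm2_C0.
          pose proof (weight_ge1 Rs (proj1_sig k)). pose proof (Cnorm2_nonneg (x k)).
          pose proof (Rinv_0_lt_compat t Ht). apply Rmult_le_pos; [lra| nra].
        + replace (Cadd (x k) (Copp C0)) with (x k) by ring.
          specialize (Hw k Hk). pose proof (Cnorm2_nonneg (x k)).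
          apply Rle_trans with (/ t * (t * Cnorm2 (x k))).
          right; field; lra.
          apply Rmult_le_compat_l. left; apply Rinv_0_lt_compat; lra. nra.
      - rewrite fsum_scal. specialize (Hb l Hl). unfold W_partial in Hb.
        pose proof (Rinv_0_lt_compat t Ht). nra. }
    rewrite <- sqrt_inv. rewrite <- (sqrt_square r) by auto. apply sqrt_le_1_alt. lra. }
  assert (Hne : E 0).
  { exists vzero. split.
    - intros l _. unfold W_partial. rewrite fsum_zero. lra. intros. unfold vzero. rewrite Cnorm2_C0; ring.
    - assert (vsub vzero (P vzero) = @vzero d).
      { apply functional_extensionality; intro k. unfold vsub, P, projS, vzero.
        destruct in_dec; ring. }
      rewrite H. split. lra. split.
      + intros y [l [_ ->]]. unfold L2_partial. rewrite fsum_zero. lra.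
        intros. unfold vzero. apply Cnorm2_C0.
      + intros b Hb. apply Hb. exists []. split. constructor. simpl. ring. }
  destruct (completeness E) as [s Hs].
  { exists (/ sqrt t). intros r Hr. auto. }
  { exists 0; auto. }
  exists s. split.
  - exists P. split; auto.
  - apply (proj2 Hs). intros r Hr. auto.
Qed.

Lemma firstn_NoDup {X} (l : list X) k : NoDup l -> NoDup (firstn k l).
Proof.
  intros H. rewrite <- (firstn_skipn k l) in H. eapply NoDup_app_remove_r; eauto.
Qed.

Lemma In_firstn' {X} (l : list X) k x : In x (firstn k l) -> In x l.
Proof.
  intros H. rewrite <- (firstn_skipn k l). apply in_or_app. auto.
Qed.

Lemma an_bounds Rs d n (S T : list (Zd d)) t tau :
  (1 <= n)%nat -> NoDup S -> (length S <= n - 1)%nat -> 0 < t ->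
  (forall k, ~ In k S -> t <= weight Rs (proj1_sig k)) ->
  NoDup T -> (n <= length T)%nat -> 0 < tau ->
  (forall k, In k T -> weight Rs (proj1_sig k) <= tau) ->
  exists a, approx_number_is Rs d n a /\ / sqrt tau <= a <= / sqrt t.
Proof.
  intros Hn HS HSl Ht Hw HT HTl Htau HwT.
  destruct (upper_an Rs d n S t Hn HS HSl Ht Hw) as [s0 [[A0 [HA0 [HR0 HO0]]] Hs0]].
  set (E := fun s => exists A : vec d -> vec d,
             linear_on Rs d A /\ rank_lt Rs d A n /\ op_norm_diff_is Rs d A s).
  assert (Hlow : forall s, E s -> / sqrt tau <= s).
  { intros s [A [HA [HR HO]]].
    apply (lower_an Rs d n (firstn n T) tau A s); auto.
    - apply firstn_NoDup; auto.
    - rewrite length_firstn. lia.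
    - intros k Hk. apply HwT. eapply In_firstn'; eauto. }
  destruct (completeness (fun y => E (- y))) as [m Hm].
  { exists (- / sqrt tau). intros y Hy. apply Hlow in Hy. lra. }
  { exists (- s0). red. rewrite Ropp_involutive. exists A0. auto. }
  exists (- m). split; [split|split].
  - intros x Hx. assert (- x <= m). { apply (proj1 Hm). red. rewrite Ropp_involutive. auto. } lra.
  - intros b Hb. assert (m <= - b). { apply (proj2 Hm). intros y Hy. apply Hb in Hy. lra. } lra.
  - assert (m <= - / sqrt tau). { apply (proj2 Hm). intros y Hy. apply Hlow in Hy. lra. } lra.
  - assert (- s0 <= m). { apply (proj1 Hm). red. rewrite Ropp_involutive. exists A0. auto. } lra.
Qed.

Definition ws (Rs : list R) (k : list Z) : R :=
  fold_right (fun p s => rpow0 (IZR (Z.abs (fst p))) (2 * snd p) + s) 0 (combine k Rs).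

Lemma weight_ws Rs k : weight Rs k = 1 + ws Rs k.
Proof. reflexivity. Qed.

Lemma ws_nonneg Rs k : 0 <= ws Rs k.
Proof. apply fold_w_nonneg. Qed.

Lemma ws_cons r Rs z k : ws (r :: Rs) (z :: k) = rpow0 (IZR (Z.abs z)) (2 * r) + ws Rs k.
Proof. reflexivity. Qed.

Lemma NoDup_map_in {X Y} (f : X -> Y) l :
  (forall a b, In a l -> In b l -> f a = f b -> a = b) -> NoDup l -> NoDup (map f l).
Proof.
  induction l as [|a l IH]; intros Hi Hn; simpl; constructor.
  - intro H. apply in_map_iff in H. destruct H as [b [Hb Hbl]].
    inversion Hn; subst. assert (b = a) by (apply Hi; simpl; auto). subst. contradiction.
  - inversion Hn; subst. apply IH; auto. intros; apply Hi; simpl; auto.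
Qed.

Lemma NoDup_prod {X Y Z0} (g : X -> Y -> Z0) (l : list X) (L : list Y) :
  NoDup l -> NoDup L ->
  (forall x1 x2 y1 y2, In x1 l -> In x2 l -> In y1 L -> In y2 L -> g x1 y1 = g x2 y2 -> x1 = x2 /\ y1 = y2) ->
  NoDup (flat_map (fun x => map (g x) L) l).
Proof.
  induction l as [|a l IH]; intros Hl HL Hi; simpl. constructor.
  inversion Hl; subst. apply NoDup_app.
  - apply NoDup_map_in; auto. intros y1 y2 Hy1 Hy2 He. apply (Hi a a y1 y2); simpl; auto.
  - apply IH; auto. intros; apply Hi; simpl; auto.
  - intros w Hw Hw'. apply in_map_iff in Hw. destruct Hw as [y1 [<- Hy1]].
    apply in_flat_map in Hw'. destruct Hw' as [x2 [Hx2 Hw']]. apply in_map_iff in Hw'.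
    destruct Hw' as [y2 [Heq Hy2]]. destruct (Hi a x2 y1 y2) as [-> _]; simpl; auto.
Qed.

Lemma length_fmprod {X Y Z0} (g : X -> Y -> Z0) (l : list X) (L : list Y) :
  length (flat_map (fun x => map (g x) L) l) = (length l * length L)%nat.
Proof.
  induction l; simpl; auto. rewrite length_app, length_map, IHl. lia.
Qed.

Lemma fsum_flat_map {X Y} (f : Y -> R) (h : X -> list Y) l :
  fsum f (flat_map h l) = fsum (fun x => fsum f (h x)) l.
Proof. induction l; simpl; auto. rewrite fsum_app, IHl. auto. Qed.

Lemma fsum_map {X Y} (f : Y -> R) (h : X -> Y) l : fsum f (map h l) = fsum (fun x => f (h x)) l.
Proof. induction l; simpl; auto. rewrite IHl; auto. Qed.

Definition zrange (K : nat) : list Z :=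
  0%Z :: flat_map (fun i => [Z.of_nat (S i); (- Z.of_nat (S i))%Z]) (seq 0 K).

Arguments zrange : simpl never.

Lemma zrange_In K z : In z (zrange K) <-> (Z.abs z <= Z.of_nat K)%Z.
Proof.
  unfold zrange. split.
  - intros [H|H]. subst; simpl; lia.
    apply in_flat_map in H. destruct H as [i [Hi H]]. apply in_seq in Hi.
    simpl in H. destruct H as [H|[H|[]]]; subst; lia.
  - intros H. destruct (Z.eq_dec z 0). left; auto. right.
    apply in_flat_map. exists (pred (Z.to_nat (Z.abs z))). split.
    + apply in_seq. lia.
    + simpl. destruct (Z_le_gt_dec 0 z); [left|right; left]; lia.
Qed.

Lemma zrange_NoDup K : NoDup (zrange K).
Proof.
  unfold zrange. constructor.
  - intro H. apply in_flat_map in H. destruct H as [i [Hi H]]. simpl in H. lia.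
  - induction K. simpl; constructor.
    rewrite seq_S, flat_map_app. apply NoDup_app; auto.
    + simpl. constructor. simpl; lia. constructor. simpl; auto. constructor.
    + intros a Ha Hb. apply in_flat_map in Ha. destruct Ha as [i [Hi Ha]]. apply in_seq in Hi.
      simpl in Hb, Ha. lia.
Qed.

Lemma zrange_length K : length (zrange K) = (2 * K + 1)%nat.
Proof.
  unfold zrange. cbn [length].
  assert (Hl : length (seq 0 K) = K) by apply length_seq.
  revert Hl. generalize (seq 0 K). intros l. revert K. induction l; intros K Hl; simpl in *. lia.
  specialize (IHl (pred K)). simpl in IHl. lia.
Qed.

Lemma fsum_zrange (f : Z -> R) K :
  fsum f (zrange K) = f 0%Z + rsum K (fun i => f (Z.of_nat (S i)) + f (- Z.of_nat (S i))%Z).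
Proof.
  unfold zrange. assert (Hc : forall a l, fsum f (a :: l) = f a + fsum f l) by reflexivity.
  rewrite Hc. f_equal. induction K. reflexivity.
  rewrite seq_S, flat_map_app, fsum_app, IHK. simpl. ring.
Qed.

Opaque zrange.
Fixpoint boxv (Ks : list nat) : list (list Z) :=
  match Ks with
  | [] => [[]]
  | K :: Ks => flat_map (fun z => map (cons z) (boxv Ks)) (zrange K)
  end.

Lemma boxv_In Ks k : In k (boxv Ks) <-> Forall2 (fun z K => (Z.abs z <= Z.of_nat K)%Z) k Ks.
Proof.
  revert k; induction Ks as [|K Ks IH]; intros k; simpl.
  - split. intros [<-|[]]. constructor. intros H; inversion H; auto.
  - split.
    + intros H. apply in_flat_map in H. destruct H as [z [Hz H]]. apply in_map_iff in H.
      destruct H as [r [<- Hr]]. constructor. apply zrange_In; auto. apply IH; auto.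
    + intros H. inversion H; subst. apply in_flat_map. exists x. split. apply zrange_In; auto.
      apply in_map. apply IH; auto.
Qed.

Lemma boxv_NoDup Ks : NoDup (boxv Ks).
Proof.
  induction Ks; simpl. constructor. simpl; auto. constructor.
  apply NoDup_prod; auto. apply zrange_NoDup. intros x1 x2 y1 y2 _ _ _ _ H. inversion H; auto.
Qed.

Definition boxcount (Ks : list nat) : nat := fold_right (fun K p => ((2 * K + 1) * p)%nat) 1%nat Ks.

Lemma boxv_length Ks : length (boxv Ks) = boxcount Ks.
Proof.
  induction Ks; simpl; auto. rewrite length_fmprod, zrange_length, IHKs. auto.
Qed.

Lemma boxv_len Ks k : In k (boxv Ks) -> length k = length Ks.
Proof. intros H. apply boxv_In in H. eapply Forall2_length; eauto. Qed.

Definition Fz (lam : R) (K : nat) (r : R) : R :=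
  fsum (fun z => exp (- lam * rpow0 (IZR (Z.abs z)) (2 * r))) (zrange K).

Lemma fsum_box_prod lam K Rs :
  fsum (fun k => exp (- lam * ws Rs k)) (boxv (repeat K (length Rs))) =
  fold_right (fun r p => Fz lam K r * p) 1 Rs.
Proof.
  induction Rs as [|r Rs IH]; simpl.
  - unfold ws. simpl. rewrite Rmult_0_r, exp_0. ring.
  - rewrite fsum_flat_map. rewrite <- IH. unfold Fz.
    rewrite Rmult_comm, <- fsum_scal.
    apply fsum_ext. intros z _. rewrite fsum_map. rewrite Rmult_comm, <- fsum_scal.
    apply fsum_ext. intros k _. rewrite ws_cons.
    rewrite <- exp_plus. f_equal. ring.
Qed.

Lemma count_chernoff Rs (L : list (list Z)) t lam :
  0 <= lam ->
  INR (length (filter (fun k => if Rlt_dec (weight Rs k) t then true else false) L)) <=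
  fsum (fun k => exp (lam * (t - weight Rs k))) L.
Proof.
  intros Hl. induction L as [|k L IH]; simpl. lra.
  destruct (Rlt_dec (weight Rs k) t).
  - simpl length. rewrite S_INR.
    assert (1 <= exp (lam * (t - weight Rs k))).
    { pose proof (exp_ineq1_le (lam * (t - weight Rs k))). nra. }
    lra.
  - pose proof (exp_pos (lam * (t - weight Rs k))). lra.
Qed.

Lemma fsum_exp_split Rs L lam t :
  fsum (fun k => exp (lam * (t - weight Rs k))) L =
  exp (lam * (t - 1)) * fsum (fun k => exp (- lam * ws Rs k)) L.
Proof.
  rewrite <- fsum_scal. apply fsum_ext. intros k _. rewrite <- exp_plus. rewrite weight_ws. f_equal. ring.
Qed.

Definition toZd (d : nat) (k : list Z) : Zd d :=
  match Nat.eq_dec (length k) d with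
  | left e => exist _ k e
  | right _ => zd0 d
  end.

Lemma toZd_val d k : length k = d -> proj1_sig (toZd d k) = k.
Proof. intros H. unfold toZd. destruct Nat.eq_dec; simpl; auto. contradiction. Qed.

Lemma toZd_NoDup d L : NoDup L -> (forall k, In k L -> length k = d) -> NoDup (map (toZd d) L).
Proof.
  intros HN HL. apply NoDup_map_in; auto. intros a b Ha Hb He.
  rewrite <- (toZd_val d a), <- (toZd_val d b) by auto. rewrite He; auto.
Qed.

Lemma toZd_proj d (k : Zd d) : toZd d (proj1_sig k) = k.
Proof.
  destruct k as [k e]. unfold toZd. simpl. destruct Nat.eq_dec as [e'|n].
  - f_equal. apply Eqdep_dec.UIP_dec, Nat.eq_dec.
  - contradiction.
Qed.

Lemma Rpower_1_base p : Rpower 1 p = 1.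
Proof. unfold Rpower. rewrite ln_1, Rmult_0_r, exp_0. auto. Qed.

Lemma rpow0_mono a b p : 0 <= a <= b -> 0 <= p -> rpow0 a p <= rpow0 b p.
Proof.
  intros Hab Hp. unfold rpow0. destruct (Req_EM_T a 0).
  - destruct (Req_EM_T b 0). lra. unfold Rpower. left; apply exp_pos.
  - destruct (Req_EM_T b 0). lra. apply Rle_Rpower_l; lra.
Qed.

Definition zasum (k : list Z) : R := fold_right (fun z s => IZR (Z.abs z) + s) 0 k.

Lemma ws_01 Rs k : (forall z, In z k -> (Z.abs z <= 1)%Z) -> ws Rs k <= zasum k.
Proof.
  revert Rs; induction k as [|z k IH]; intros Rs H; destruct Rs as [|r Rs]; simpl.
  - unfold ws; simpl; lra.
  - unfold ws; simpl; lra.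
  - unfold ws; simpl. fold (zasum k). assert (0 <= zasum k).
    { clear IH. induction k; simpl. lra. assert (0 <= IZR (Z.abs a)) by (apply IZR_le; lia).
      assert (0 <= zasum k) by (apply IHk; intros; apply H; simpl in *; tauto). unfold zasum in *; simpl. lra. }
    assert (0 <= IZR (Z.abs z)) by (apply IZR_le; lia). lra.
  - rewrite ws_cons. simpl. fold (zasum k).
    assert (ws Rs k <= zasum k) by (apply IH; intros; apply H; simpl; auto).
    assert (rpow0 (IZR (Z.abs z)) (2 * r) <= IZR (Z.abs z)).
    { assert (Hz : (Z.abs z <= 1)%Z) by (apply H; simpl; auto).
      destruct (Z.eq_dec (Z.abs z) 0) as [e|e].
      - rewrite e. unfold rpow0. destruct Req_EM_T; lra.
      - assert (Z.abs z = 1%Z) by lia. rewrite H1. unfold rpow0. destruct Req_EM_T. lra.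
        rewrite Rpower_1_base. lra. }
    lra.
Qed.

Lemma ws_box Rs Ks k : Forall2 (fun z K => (Z.abs z <= Z.of_nat K)%Z) k Ks ->
  (forall r, In r Rs -> 0 <= r) ->
  ws Rs k <= fold_right (fun p s => rpow0 (INR (fst p)) (2 * snd p) + s) 0 (combine Ks Rs).
Proof.
  intros HF. revert Rs. induction HF as [|z K k Ks Hz HF IH]; intros Rs Hr.
  - unfold ws; simpl; lra.
  - destruct Rs as [|r Rs]. unfold ws; simpl; lra.
    rewrite ws_cons. simpl.
    assert (ws Rs k <= fold_right (fun p s => rpow0 (INR (fst p)) (2 * snd p) + s) 0 (combine Ks Rs))
      by (apply IH; intros; apply Hr; simpl; auto).
    assert (rpow0 (IZR (Z.abs z)) (2 * r) <= rpow0 (INR K) (2 * r)).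
    { apply rpow0_mono. split. apply IZR_le; lia. rewrite INR_IZR_INZ. apply IZR_le; lia.
      assert (0 <= r) by (apply Hr; simpl; auto). lra. }
    lra.
Qed.

Definition unitv (b i : nat) : list Z := map (fun j => if Nat.eqb j i then 1%Z else 0%Z) (seq 0 b).

Lemma unitv_length b i : length (unitv b i) = b.
Proof. unfold unitv. rewrite length_map, length_seq. auto. Qed.

Lemma unitv_entries b i z : In z (unitv b i) -> (Z.abs z <= 1)%Z.
Proof. unfold unitv. intros H. apply in_map_iff in H. destruct H as [j [<- _]]. destruct Nat.eqb; lia. Qed.

Lemma unitv_zasum b i : (i < b)%nat -> zasum (unitv b i) = 1.
Proof.
  unfold unitv. intros Hi.
  assert (H : forall s c, zasum (map (fun j => if Nat.eqb j i then 1%Z else 0%Z) (seq s c)) =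
                          if andb (Nat.leb s i) (Nat.ltb i (s + c)) then 1 else 0).
  { intros s c. revert s. induction c; intros s; simpl.
    - destruct (Nat.leb_spec s i), (Nat.ltb_spec i (s + 0)); simpl; auto; lia.
    - unfold zasum in *. simpl. rewrite IHc.
      destruct (Nat.eqb_spec s i).
      + subst. destruct (Nat.leb_spec (S i) i); [lia|]. simpl.
        destruct (Nat.leb_spec i i), (Nat.ltb_spec i (i + S c)); simpl; try lia. ring.
      + destruct (Nat.leb_spec (S s) i), (Nat.ltb_spec i (S s + c)), (Nat.leb_spec s i), (Nat.ltb_spec i (s + S c));
          simpl; try lia; ring. }
  rewrite H. destruct (Nat.leb_spec 0 i), (Nat.ltb_spec i (0 + b)); simpl; auto; lia.
Qed.

Lemma unitv_inj b i i' : (i < b)%nat -> (i' < b)%nat -> unitv b i = unitv b i' -> i = i'.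
Proof.
  intros Hi Hi' H. assert (E : nth i (unitv b i) 0%Z = nth i (unitv b i') 0%Z) by (rewrite H; auto).
  unfold unitv in E.
  rewrite !(nth_map_indep _ _ _ O) in E by (rewrite length_seq; auto).
  rewrite seq_nth in E by auto. simpl in E.
  rewrite Nat.eqb_refl in E. destruct (Nat.eqb_spec i i'); auto. discriminate.
Qed.

Lemma app_inj_len {X} (a a' r r' : list X) : length a = length a' -> a ++ r = a' ++ r' -> a = a' /\ r = r'.
Proof.
  revert a'; induction a as [|x a IH]; intros [|x' a'] Hl He; simpl in *; try lia; auto.
  inversion He; subst. destruct (IH a') as [-> ->]; auto.
Qed.

Fixpoint blocks (m b : nat) : list (list Z) :=
  match m with
  | O => [[]]
  | S m => flat_map (fun i => map (fun r => unitv b i ++ r) (blocks m b)) (seq 0 b)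
  end.

Lemma blocks_NoDup m b : NoDup (blocks m b).
Proof.
  induction m; simpl. constructor. simpl; auto. constructor.
  apply NoDup_prod; auto. apply seq_NoDup.
  intros x1 x2 y1 y2 H1 H2 _ _ He. apply in_seq in H1. apply in_seq in H2.
  apply app_inj_len in He. destruct He as [He ->]. split; auto. apply (unitv_inj b); auto; lia.
  rewrite !unitv_length; auto.
Qed.

Lemma blocks_length m b : length (blocks m b) = (b ^ m)%nat.
Proof. induction m; simpl; auto. rewrite length_fmprod, length_seq, IHm. auto. Qed.

Lemma blocks_prop m b k : In k (blocks m b) ->
  length k = (m * b)%nat /\ (forall z, In z k -> (Z.abs z <= 1)%Z) /\ zasum k = INR m.
Proof.
  revert k; induction m; intros k Hk; simpl in Hk.
  - destruct Hk as [<-|[]]. simpl. split; auto. split. intros z []. reflexivity.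
  - apply in_flat_map in Hk. destruct Hk as [i [Hi Hk]]. apply in_map_iff in Hk.
    destruct Hk as [r [<- Hr]]. apply in_seq in Hi. destruct (IHm r Hr) as [H1 [H2 H3]].
    split; [|split].
    + rewrite length_app, unitv_length, H1. lia.
    + intros z Hz. apply in_app_or in Hz. destruct Hz. eapply unitv_entries; eauto. auto.
    + assert (Ha : forall a c, zasum (a ++ c) = zasum a + zasum c).
      { intros a c. induction a; unfold zasum in *; simpl. ring. rewrite IHa. ring. }
      rewrite Ha, H3, unitv_zasum by lia. rewrite S_INR. ring.
Qed.

Lemma zasum_app a c : zasum (a ++ c) = zasum a + zasum c.
Proof. induction a; unfold zasum in *; simpl. ring. rewrite IHa. ring. Qed.

Lemma zasum_zeros c : zasum (repeat 0%Z c) = 0.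
Proof. induction c; unfold zasum in *; simpl; auto. rewrite IHc. simpl. ring. Qed.

Definition padblocks (d m b : nat) : list (list Z) :=
  map (fun k => k ++ repeat 0%Z (d - m * b)) (blocks m b).

Lemma padblocks_NoDup d m b : NoDup (padblocks d m b).
Proof.
  unfold padblocks. apply NoDup_map_in. 2: apply blocks_NoDup.
  intros x y Hx Hy He. apply blocks_prop in Hx. apply blocks_prop in Hy.
  apply app_inj_len in He. tauto. lia.
Qed.

Lemma padblocks_length d m b : length (padblocks d m b) = (b ^ m)%nat.
Proof. unfold padblocks. rewrite length_map. apply blocks_length. Qed.

Lemma padblocks_prop d m b k : (m * b <= d)%nat -> In k (padblocks d m b) ->
  length k = d /\ (forall z, In z k -> (Z.abs z <= 1)%Z) /\ zasum k = INR m.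
Proof.
  intros Hmb Hk. unfold padblocks in Hk. apply in_map_iff in Hk. destruct Hk as [k0 [<- Hk0]].
  destruct (blocks_prop _ _ _ Hk0) as [H1 [H2 H3]]. split; [|split].
  - rewrite length_app, repeat_length. lia.
  - intros z Hz. apply in_app_or in Hz. destruct Hz; auto. apply repeat_spec in H. subst. simpl. lia.
  - rewrite zasum_app, zasum_zeros, H3. ring.
Qed.

Definition Kceil (x : R) : nat := Z.to_nat (up x).

Lemma Kceil_spec x : 0 <= x -> x <= INR (Kceil x) <= x + 1.
Proof.
  intros Hx. unfold Kceil. destruct (archimed x) as [H1 H2].
  assert (0 <= up x)%Z. { apply le_IZR. lra. }
  rewrite INR_IZR_INZ, Z2Nat.id by auto. lra.
Qed.

Definition Kfloor (x : R) : nat := Z.to_nat (up x - 1).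

Lemma Kfloor_spec x : 0 <= x -> INR (Kfloor x) <= x < INR (Kfloor x) + 1.
Proof.
  intros Hx. unfold Kfloor. destruct (archimed x) as [H1 H2].
  assert (1 <= up x)%Z. { apply le_IZR. assert (0 < IZR (up x)) by lra.
    assert (0 < up x)%Z by (apply lt_IZR; auto). apply IZR_le. lia. }
  rewrite INR_IZR_INZ, Z2Nat.id by lia. rewrite minus_IZR. simpl. lra.
Qed.

Lemma exp_le_exp x y : x <= y -> exp x <= exp y.
Proof. intros [H|H]. left; apply exp_increasing; auto. subst; lra. Qed.

Lemma exp_le_inv x y : exp x <= exp y -> x <= y.
Proof. intros H. destruct (Rle_dec x y); auto. assert (exp y < exp x) by (apply exp_increasing; lra). lra. Qed.

Lemma ln_le x y : 0 < x -> x <= y -> ln x <= ln y.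
Proof. intros Hx [H|H]. left; apply ln_increasing; auto. subst; lra. Qed.

Lemma ln_div x y : 0 < x -> 0 < y -> ln (x / y) = ln x - ln y.
Proof.
  intros. unfold Rdiv. rewrite ln_mult by (auto; apply Rinv_0_lt_compat; auto).
  rewrite ln_Rinv by auto. ring.
Qed.

Lemma Fz_eq lam K r :
  Fz lam K r = 1 + 2 * rsum K (fun i => exp (- lam * Rpower (INR (S i)) (2 * r))).
Proof.
  unfold Fz. rewrite fsum_zrange. f_equal.
  - simpl. unfold rpow0. destruct Req_EM_T; [|lra]. rewrite Rmult_0_r, exp_0. auto.
  - rewrite <- rsum_scal. apply rsum_ext. intros i _.
    assert (E1 : IZR (Z.abs (Z.of_nat (S i))) = INR (S i)).
    { rewrite Z.abs_eq by lia. rewrite INR_IZR_INZ. auto. }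
    assert (E2 : IZR (Z.abs (- Z.of_nat (S i))) = INR (S i)).
    { rewrite Z.abs_opp, Z.abs_eq by lia. rewrite INR_IZR_INZ. auto. }
    rewrite E1, E2. unfold rpow0. destruct Req_EM_T as [e|]. pose proof (pos_INR i). rewrite S_INR in e. lra.
    ring.
Qed.

Lemma exp_INR_mul a n : exp (INR n * a) = exp a ^ n.
Proof.
  induction n. simpl. rewrite Rmult_0_l, exp_0. auto.
  rewrite S_INR. simpl. rewrite <- IHn, <- exp_plus. f_equal. ring.
Qed.

Lemma exp_neg_bound (Y : R) (N : nat) : 0 < Y -> (1 <= N)%nat -> exp (- Y) <= INR N ^ N / Y ^ N.
Proof.
  intros HY HN. assert (HNp : 0 < INR N) by (apply lt_0_INR; lia).
  assert (H1 : Y / INR N < exp (Y / INR N)).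
  { pose proof (exp_ineq1_le (Y / INR N)). lra. }
  assert (H2 : (Y / INR N) ^ N <= exp Y).
  { replace Y with (INR N * (Y / INR N)) at 2 by (field; lra). rewrite exp_INR_mul.
    apply pow_incr. split. left; apply Rdiv_lt_0_compat; lra. lra. }
  rewrite exp_Ropp. unfold Rdiv in *. rewrite Rpow_mult_distr in H2.
  rewrite pow_inv in H2.
  assert (0 < Y ^ N) by (apply pow_lt; auto).
  assert (0 < INR N ^ N) by (apply pow_lt; auto).
  apply Rle_trans with (/ (Y ^ N * / INR N ^ N)).
  - apply Rinv_le_contravar; auto. apply Rmult_lt_0_compat; auto. apply Rinv_0_lt_compat; auto.
  - right. rewrite Rinv_mult, Rinv_inv. ring.
Qed.

Lemma Rpower_ge1 z p : 1 <= z -> 0 <= p -> 1 <= Rpower z p.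
Proof. intros Hz Hp. rewrite <- (Rpower_O z) by lra. apply Rle_Rpower; lra. Qed.

Lemma Rpower_pow_sq z p (N : nat) : 1 <= z -> 2 <= p * INR N -> z ^ 2 <= Rpower z p ^ N.
Proof.
  intros Hz Hp. rewrite <- (Rpower_pow N (Rpower z p)) by (unfold Rpower; apply exp_pos).
  rewrite Rpower_mult. rewrite <- (Rpower_pow 2 z) by lra. simpl INR.
  apply Rle_Rpower; lra.
Qed.

Lemma rsum_inv_sq K : rsum K (fun i => / (INR (S i)) ^ 2) <= 2 - 2 / INR (S K).
Proof.
  induction K. simpl. lra.
  cbn [rsum]. assert (HK : 0 <= INR K) by apply pos_INR.
  rewrite !S_INR in *.
  assert (/ (INR K + 1) ^ 2 <= 2 / (INR K + 1) - 2 / (INR K + 1 + 1)).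
  { set (a := INR K + 1).
    assert (E : 2 / a - 2 / (a + 1) - / a ^ 2 = (a - 1) / (a ^ 2 * (a + 1))) by (unfold a; field; lra).
    assert (0 <= (a - 1) / (a ^ 2 * (a + 1))).
    { unfold Rdiv. apply Rmult_le_pos. unfold a; lra. left; apply Rinv_0_lt_compat. unfold a; nra. }
    lra. }
  lra.
Qed.

Lemma term_B1 lam z p (N : nat) : 1 <= lam -> 1 <= z -> 0 <= p -> 2 <= p * INR N -> (1 <= N)%nat ->
  exp (- lam * Rpower z p) <= exp (- lam) * (exp 1 * INR N ^ N) * / z ^ 2.
Proof.
  intros Hl Hz Hp HpN HN. set (Y := Rpower z p).
  assert (HY : 1 <= Y) by (apply Rpower_ge1; auto).
  assert (E : exp (- lam * Y) <= exp (- lam) * exp 1 * exp (- Y)).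
  { rewrite <- !exp_plus. apply exp_le_exp. nra. }
  assert (E2 : exp (- Y) <= INR N ^ N / z ^ 2).
  { apply Rle_trans with (INR N ^ N / Y ^ N). apply exp_neg_bound; auto; lra; lia.
    unfold Rdiv. apply Rmult_le_compat_l. apply pow_le, pos_INR.
    apply Rinv_le_contravar. apply pow_lt; lra. apply Rpower_pow_sq; auto. }
  pose proof (exp_pos (- lam)). pose proof (exp_pos 1).
  apply Rle_trans with (exp (- lam) * exp 1 * exp (- Y)); auto.
  replace (exp (- lam) * (exp 1 * INR N ^ N) * / z ^ 2) with (exp (- lam) * exp 1 * (INR N ^ N / z ^ 2)) by (unfold Rdiv; ring).
  apply Rmult_le_compat_l; auto. nra.
Qed.

Lemma Fz_B1 lam K r (N : nat) : 1 <= lam -> 0 <= r -> 2 <= 2 * r * INR N -> (1 <= N)%nat ->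
  Fz lam K r <= 1 + exp (- lam) * (4 * exp 1 * INR N ^ N).
Proof.
  intros Hl Hr HrN HN. rewrite Fz_eq.
  assert (rsum K (fun i => exp (- lam * Rpower (INR (S i)) (2 * r))) <=
          rsum K (fun i => exp (- lam) * (exp 1 * INR N ^ N) * / (INR (S i)) ^ 2)).
  { apply rsum_le. intros i _. apply term_B1; auto. rewrite S_INR; pose proof (pos_INR i); lra. lra. }
  rewrite rsum_scal in H. pose proof (rsum_inv_sq K).
  assert (0 < 2 / INR (S K)). { apply Rdiv_lt_0_compat. lra. apply lt_0_INR; lia. }
  assert (0 <= exp (- lam) * (exp 1 * INR N ^ N)).
  { pose proof (exp_pos (- lam)); pose proof (exp_pos 1); pose proof (pow_le (INR N) N (pos_INR N)).
    apply Rmult_le_pos; [lra| apply Rmult_le_pos; lra]. }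
  nra.
Qed.

Lemma rsum_tele_h K h : 0 < h ->
  rsum K (fun i => h ^ 2 / (INR (S i) ^ 2 + h ^ 2)) <= 2 * h ^ 2 * (/ h - / (INR K + h)).
Proof.
  intros Hh. induction K.
  - simpl. replace (0 + h) with h by ring. replace (/ h - / h) with 0 by ring. right; ring.
  - cbn [rsum]. rewrite S_INR.
    assert (HK : 0 <= INR K) by apply pos_INR.
    assert (h ^ 2 / ((INR K + 1) ^ 2 + h ^ 2) <= 2 * h ^ 2 * (/ (INR K + h) - / (INR K + 1 + h))).
    { set (a := INR K) in *.
      assert (E : / (a + h) - / (a + 1 + h) = / ((a + h) * (a + 1 + h))). { field. split; intro; lra. }
      rewrite E. unfold Rdiv.
      replace (2 * h ^ 2 * / ((a + h) * (a + 1 + h))) with (h ^ 2 * (2 / ((a + h) * (a + 1 + h)))) by (unfold Rdiv; ring).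
      apply Rmult_le_compat_l. nra.
      apply Rle_trans with (/ ((a + h) * (a + 1 + h) / 2)).
      - apply Rinv_le_contravar. nra.
        assert ((a + h) * (a + 1 + h) <= (a + 1 + h) ^ 2) by nra.
        assert ((a + 1 + h) ^ 2 <= 2 * ((a + 1) ^ 2 + h ^ 2)) by (pose proof (Rle_0_sqr (a + 1 - h)); unfold Rsqr in *; nra). lra.
      - right. field. split; intro; nra. }
    lra.
Qed.

Lemma ln_exp' x : ln (exp x) = x.
Proof. apply ln_exp. Qed.

Lemma term_B2 lam z p (N : nat) : 0 < lam -> 1 <= z -> 0 < p -> 2 <= p * INR N -> (1 <= N)%nat ->
  exp (- lam * Rpower z p) <=
  (1 + INR N ^ N) * (2 * (Rpower lam (- / p)) ^ 2 / (z ^ 2 + (Rpower lam (- / p)) ^ 2)).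
Proof.
  intros Hl Hz Hp HpN HN. set (h := Rpower lam (- / p)).
  assert (Hh : 0 < h) by (unfold h, Rpower; apply exp_pos).
  assert (HNN : 0 <= INR N ^ N) by (apply pow_le, pos_INR).
  assert (Hz2 : 0 < z ^ 2) by (apply pow_lt; lra).
  assert (Hh2 : 0 < h ^ 2) by (apply pow_lt; lra).
  destruct (Rle_dec z h) as [Hzh|Hzh].
  - assert (exp (- lam * Rpower z p) <= 1).
    { rewrite <- exp_0. apply exp_le_exp. assert (0 < Rpower z p) by (unfold Rpower; apply exp_pos). nra. }
    assert (1 <= 2 * h ^ 2 / (z ^ 2 + h ^ 2)).
    { apply Rmult_le_reg_r with (z ^ 2 + h ^ 2). lra. unfold Rdiv. rewrite Rmult_assoc, Rinv_l by lra.
      assert (z ^ 2 <= h ^ 2) by (apply pow_incr; lra). lra. }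
    assert (0 <= 2 * h ^ 2 / (z ^ 2 + h ^ 2)) by lra. nra.
  - assert (Hzh' : h < z) by lra.
    set (Y := Rpower (z / h) p).
    assert (HYe : lam * Rpower z p = Y).
    { unfold Y, h, Rpower. rewrite ln_div by (try lra; apply exp_pos). rewrite ln_exp.
      rewrite <- (exp_ln lam) at 1 by auto. rewrite <- exp_plus. f_equal. field. lra. }
    assert (Hzh1 : 1 <= z / h). { apply Rmult_le_reg_r with h; auto. unfold Rdiv. rewrite Rmult_assoc, Rinv_l by lra. lra. }
    assert (HY : 1 <= Y) by (apply Rpower_ge1; lra).
    replace (- lam * Rpower z p) with (- Y) by (rewrite <- HYe; ring).
    assert (E2 : exp (- Y) <= INR N ^ N / (z / h) ^ 2).
    { apply Rle_trans with (INR N ^ N / Y ^ N). apply exp_neg_bound; auto; lra.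
      unfold Rdiv. apply Rmult_le_compat_l; auto.
      apply Rinv_le_contravar. apply pow_lt; lra. apply Rpower_pow_sq; auto. }
    assert (E3 : INR N ^ N / (z / h) ^ 2 = INR N ^ N * (h ^ 2 / z ^ 2)) by (field; lra).
    assert (E4 : h ^ 2 / z ^ 2 <= 2 * h ^ 2 / (z ^ 2 + h ^ 2)).
    { assert (h ^ 2 <= z ^ 2) by (apply pow_incr; lra).
      unfold Rdiv. apply Rle_trans with (h ^ 2 * (2 * / (z ^ 2 + h ^ 2))).
      apply Rmult_le_compat_l. lra.
      apply Rle_trans with (/ ((z ^ 2 + h ^ 2) / 2)).
      apply Rinv_le_contravar. lra. lra. right; field; lra. right; ring. }
    assert (0 <= h ^ 2 / z ^ 2) by (unfold Rdiv; apply Rmult_le_pos; [lra| left; apply Rinv_0_lt_compat; lra]).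
    nra.
Qed.

Lemma Fz_B2 lam K r (N : nat) : 0 < lam <= 1 -> 0 < r -> 2 <= 2 * r * INR N -> (1 <= N)%nat ->
  Fz lam K r <= (9 + 8 * INR N ^ N) * Rpower lam (- / (2 * r)).
Proof.
  intros [Hl Hl1] Hr HrN HN. rewrite Fz_eq. set (h := Rpower lam (- / (2 * r))).
  assert (Hh : 1 <= h).
  { unfold h, Rpower. rewrite <- exp_0. apply exp_le_exp.
    assert (ln lam <= 0). { rewrite <- ln_1. apply ln_le; lra. }
    assert (0 < / (2 * r)) by (apply Rinv_0_lt_compat; lra). nra. }
  assert (HNN : 0 <= INR N ^ N) by (apply pow_le, pos_INR).
  assert (rsum K (fun i => exp (- lam * Rpower (INR (S i)) (2 * r))) <=
          rsum K (fun i => (2 * (1 + INR N ^ N)) * (h ^ 2 / (INR (S i) ^ 2 + h ^ 2)))).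
  { apply rsum_le. intros i _.
    apply Rle_trans with ((1 + INR N ^ N) * (2 * h ^ 2 / (INR (S i) ^ 2 + h ^ 2))).
    apply term_B2; auto. rewrite S_INR; pose proof (pos_INR i); lra. lra.
    right. unfold Rdiv. ring. }
  rewrite rsum_scal in H.
  pose proof (rsum_tele_h K h ltac:(lra)).
  assert (0 < / (INR K + h)) by (apply Rinv_0_lt_compat; pose proof (pos_INR K); lra).
  assert (2 * h ^ 2 * (/ h - / (INR K + h)) <= 2 * h).
  { assert (2 * h ^ 2 * / h = 2 * h) by (field; lra). assert (0 < h ^ 2) by nra. nra. }
  nra.
Qed.

Lemma ln_le_sub1 y : 0 < y -> ln y <= y - 1.
Proof.
  intros Hy. apply exp_le_inv. rewrite exp_ln by auto. pose proof (exp_ineq1_le (y - 1)). lra.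
Qed.

Lemma ln_ge_1_inv x : 0 < x -> 1 - / x <= ln x.
Proof.
  intros Hx. pose proof (ln_le_sub1 (/ x) (Rinv_0_lt_compat _ Hx)). rewrite ln_Rinv in H by auto. lra.
Qed.

Lemma ln_pos' x : 1 < x -> 0 < ln x.
Proof. intros. rewrite <- ln_1. apply ln_increasing; lra. Qed.

Lemma ln2_gt : 1 / 2 < ln 2.
Proof.
  assert (exp (1 / 2) < 2).
  { assert (exp (1/2) * exp (1/2) = exp 1) by (rewrite <- exp_plus; f_equal; field).
    pose proof exp_le_3. pose proof (exp_pos (1/2)). nra. }
  rewrite <- (ln_exp (1/2)). apply ln_increasing. apply exp_pos. auto.
Qed.

Lemma ln2_lt : ln 2 < 1.
Proof.
  rewrite <- (ln_exp 1). apply ln_increasing. lra. pose proof (exp_ineq1 1). lra.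
Qed.

Lemma ln3_ge : 1 <= ln 3.
Proof. rewrite <- (ln_exp 1). apply ln_le. apply exp_pos. apply exp_le_3. Qed.

Lemma ln2_ln3 : 3 * ln 3 <= 5 * ln 2.
Proof.
  replace 3 with (INR 3) at 1 by (simpl; lra). replace 5 with (INR 5) at 1 by (simpl; lra).
  rewrite <- !(ln_pow) by lra. apply ln_le. simpl; lra. simpl; lra.
Qed.

Lemma ws_ge_term Rs k z : In z k -> length k = length Rs ->
  exists r, In r Rs /\ rpow0 (IZR (Z.abs z)) (2 * r) <= ws Rs k.
Proof.
  revert Rs; induction k as [|a k IH]; intros Rs Hz Hl; [destruct Hz|].
  destruct Rs as [|r Rs]; [simpl in Hl; lia|]. rewrite ws_cons.
  destruct Hz as [<-|Hz].
  - exists r. split. simpl; auto. pose proof (ws_nonneg Rs k). lra.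
  - destruct (IH Rs Hz) as [r' [Hr' Hle]]. simpl in Hl; lia.
    exists r'. split. simpl; auto. pose proof (rpow0_nonneg (IZR (Z.abs a)) (2 * r)). lra.
Qed.

Lemma Forall2_repeat (k : list Z) K : (forall z, In z k -> (Z.abs z <= Z.of_nat K)%Z) ->
  Forall2 (fun z K => (Z.abs z <= Z.of_nat K)%Z) k (repeat K (length k)).
Proof.
  induction k; intros H; simpl; constructor. apply H; simpl; auto. apply IHk; intros; apply H; simpl; auto.
Qed.

Lemma fold_prod_le (F G : R -> R) (Rs : list R) :
  (forall r, In r Rs -> 0 <= F r <= G r) ->
  fold_right (fun r p => F r * p) 1 Rs <= fold_right (fun r p => G r * p) 1 Rs.
Proof.
  induction Rs; simpl; intros H. lra.
  assert (0 <= fold_right (fun r p => F r * p) 1 Rs).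
  { clear IHRs. induction Rs; simpl. lra. apply Rmult_le_pos. apply H; simpl; auto. apply IHRs. intros; apply H; simpl in *; tauto. }
  assert (fold_right (fun r p => F r * p) 1 Rs <= fold_right (fun r p => G r * p) 1 Rs) by (apply IHRs; intros; apply H; simpl; auto).
  destruct (H a) as [Ha1 Ha2]; simpl; auto. apply Rmult_le_compat; auto.
Qed.

Lemma Fz_nonneg lam K r : 0 <= Fz lam K r.
Proof. unfold Fz. apply fsum_nonneg. intros; left; apply exp_pos. Qed.

Lemma fold_const (c : R) (Rs : list R) : fold_right (fun r p => c * p) 1 Rs = c ^ length Rs.
Proof. induction Rs; simpl; auto. rewrite IHRs. auto. Qed.

Lemma upper_construct Rs d v t lam : length Rs = d -> 0 < v -> (forall r, In r Rs -> v <= r) ->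
  0 < t -> 0 <= lam ->
  exists K (S : list (Zd d)), NoDup S /\ (forall k, ~ In k S -> t <= weight Rs (proj1_sig k)) /\
    INR (length S) <= exp (lam * (t - 1)) * fold_right (fun r p => Fz lam K r * p) 1 Rs.
Proof.
  intros Hd Hv HRs Ht Hl.
  set (K := Kceil (exp (t / (2 * v)))).
  set (P := fun k => if Rlt_dec (weight Rs k) t then true else false).
  set (L := filter P (boxv (repeat K d))).
  exists K, (map (toZd d) L). split; [|split].
  - apply toZd_NoDup. apply NoDup_filter, boxv_NoDup.
    intros k Hk. apply filter_In in Hk. destruct Hk as [Hk _]. apply boxv_len in Hk. rewrite repeat_length in Hk. auto.
  - intros k Hk. destruct (Rle_dec t (weight Rs (proj1_sig k))) as [|Hlt]; auto. exfalso. apply Hk.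
    rewrite <- (toZd_proj d k). apply in_map. apply filter_In. split.
    + apply boxv_In. destruct k as [k Hkl]. simpl in *. rewrite <- Hkl. apply Forall2_repeat.
      intros z Hz. destruct (Z_le_gt_dec (Z.abs z) (Z.of_nat K)) as [|Hgt]; auto. exfalso. apply Hlt.
      destruct (ws_ge_term Rs k z Hz) as [r [Hr Hle]]. lia.
      rewrite weight_ws. assert (v <= r) by auto.
      assert (HK := Kceil_spec (exp (t / (2 * v))) ltac:(left; apply exp_pos)). fold K in HK.
      assert (Hz1 : INR K + 1 <= IZR (Z.abs z)). { rewrite INR_IZR_INZ. rewrite <- plus_IZR. apply IZR_le. lia. }
      assert (Hzpos : 0 < IZR (Z.abs z)) by (pose proof (exp_pos (t / (2 * v))); lra).
      assert (t <= rpow0 (IZR (Z.abs z)) (2 * r)).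
      { unfold rpow0. destruct Req_EM_T. lra. unfold Rpower.
        pose proof (exp_ineq1_le (2 * r * ln (IZR (Z.abs z)))).
        assert (t / (2 * v) <= ln (IZR (Z.abs z))).
        { rewrite <- (ln_exp (t / (2 * v))). apply ln_le. apply exp_pos. lra. }
        assert (t <= 2 * r * (t / (2 * v))).
        { unfold Rdiv. rewrite Rinv_mult. replace (2 * r * (t * (/ 2 * / v))) with (t * (r / v)) by (field; lra).
          assert (1 <= r / v). { apply Rmult_le_reg_r with v; auto. unfold Rdiv. rewrite Rmult_assoc, Rinv_l; lra. }
          nra. }
        assert (0 <= t / (2 * v)) by (apply Rmult_le_pos; [lra| left; apply Rinv_0_lt_compat; lra]).
        nra. }
      pose proof (ws_nonneg Rs k). lra.
    + unfold P. destruct Rlt_dec; auto. lra.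
  - rewrite length_map. unfold L.
    apply Rle_trans with (fsum (fun k => exp (lam * (t - weight Rs k))) (boxv (repeat K d))).
    apply count_chernoff; auto.
    rewrite fsum_exp_split. rewrite <- Hd. rewrite fsum_box_prod. lra.
Qed.

Definition Bc (N : nat) : R := 2 * exp 1 * INR N ^ N.
Definition dlt (N : nat) : R := / (100 * (1 + ln (4 * Bc N))).
Definition eps (N : nat) : R := dlt N ^ 2.

Lemma Bc_ge2 N : (1 <= N)%nat -> 2 <= Bc N.
Proof.
  intros HN. unfold Bc. assert (1 <= INR N) by (apply (le_INR 1); auto).
  assert (1 <= INR N ^ N) by (apply pow_R1_Rle; auto).
  assert (1 <= exp 1) by (pose proof (exp_ineq1_le 1); lra). nra.
Qed.

Lemma dlt_props N : (1 <= N)%nat -> 0 < dlt N <= / 100 /\ dlt N * (100 * (1 + ln (4 * Bc N))) = 1.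
Proof.
  intros HN. pose proof (Bc_ge2 N HN).
  assert (0 <= ln (4 * Bc N)) by (left; apply ln_pos'; lra).
  unfold dlt. split; [split|].
  - apply Rinv_0_lt_compat. lra.
  - apply Rinv_le_contravar; lra.
  - field. lra.
Qed.

Definition tM (N d n : nat) : R :=
  eps N * ln (INR n) / ln (1 + INR d * ln 2 / ln (INR n)).

Lemma upper_M v N Rs d n : 0 < v -> (1 <= N)%nat -> 2 <= 2 * v * INR N -> (1 <= d)%nat ->
  length Rs = d -> (forall r, In r Rs -> v <= r) -> (2 <= n)%nat -> (n <= 3 ^ d)%nat ->
  exists S : list (Zd d), NoDup S /\ (length S <= n - 1)%nat /\
    forall k, ~ In k S -> tM N d n <= weight Rs (proj1_sig k).
Proof.
  intros Hv HN HvN Hd HRl HRs Hn2 Hn3.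
  destruct (dlt_props N HN) as [[Hd0 Hd1] Hdeq].
  pose proof (Bc_ge2 N HN) as HB.
  set (dl := dlt N) in *. set (B := Bc N) in *.
  assert (Heps : eps N = dl ^ 2) by reflexivity.
  assert (HdR : 1 <= INR d) by (apply (le_INR 1); auto).
  set (L := ln (INR n)).
  assert (HnR : 2 <= INR n) by (apply (le_INR 2); auto).
  assert (HL : 0 < L) by (apply ln_pos'; lra).
  assert (HL3 : L <= INR d * ln 3).
  { unfold L. rewrite <- ln_pow by lra. apply ln_le. lra.
    replace 3 with (INR 3) by (simpl; lra). rewrite <- pow_INR. apply le_INR; auto. }
  pose proof ln2_gt. pose proof ln2_lt. pose proof ln3_ge. pose proof ln2_ln3.
  set (y := INR d * ln 2 / L).
  assert (HyL : y * L = INR d * ln 2) by (unfold y; field; lra).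
  assert (Hy : 3 / 5 <= y).
  { assert (0 < y) by (unfold y; apply Rdiv_lt_0_compat; nra).
    assert (INR d * ln 3 * y >= L * y) by nra. nra. }
  set (q := ln (1 + y)).
  assert (Hq : 3 / 8 <= q).
  { pose proof (ln_ge_1_inv (1 + y) ltac:(lra)). fold q in H3.
    assert (/ (1 + y) <= 5 / 8). { apply Rle_trans with (/ (8/5)). apply Rinv_le_contravar; lra. lra. }
    lra. }
  assert (Hqy : q <= y) by (pose proof (ln_le_sub1 (1 + y) ltac:(lra)); fold q in H3; lra).
  set (t := eps N * L / q).
  assert (HtM : tM N d n = t) by reflexivity.
  assert (Hdl2 : 0 < dl ^ 2) by (apply pow_lt; lra).
  assert (Ht : 0 < t) by (unfold t; rewrite Heps; apply Rdiv_lt_0_compat; [apply Rmult_lt_0_compat|]; lra).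
  set (X := 2 * B * INR d / t).
  assert (HX : X = (2 * B / (dl ^ 2 * ln 2)) * y * q).
  { unfold X, t. rewrite Heps. unfold y. field. repeat split; try lra. }
  assert (HX3 : 3 <= X).
  { rewrite HX. assert (dl ^ 2 <= / 10000).
    { replace (/ 10000) with ((/100) ^ 2) by field. apply pow_incr; lra. }
    assert (2 * B / (dl ^ 2 * ln 2) >= 40000).
    { apply Rle_ge. apply Rmult_le_reg_r with (dl ^ 2 * ln 2). nra.
      unfold Rdiv. rewrite Rmult_assoc, Rinv_l by nra. nra. }
    set (C := 2 * B / (dl ^ 2 * ln 2)) in *.
    assert (C * y >= 24000) by nra. nra. }
  set (lam := ln X).
  assert (Hlam1 : 1 <= lam).
  { unfold lam. rewrite <- (ln_exp 1). apply ln_le. apply exp_pos. pose proof exp_le_3. lra. }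
  destruct (upper_construct Rs d v t lam HRl Hv HRs Ht ltac:(lra)) as [K [S [HSn [HSw HSc]]]].
  exists S. split; auto. split.
  2:{ intros k Hk. rewrite HtM. auto. }
  assert (Hprod : fold_right (fun r p => Fz lam K r * p) 1 Rs <= (1 + exp (- lam) * (2 * B)) ^ d).
  { rewrite <- HRl, <- fold_const. apply fold_prod_le. intros r Hr. split. apply Fz_nonneg.
    replace (exp (- lam) * (2 * B)) with (exp (- lam) * (4 * exp 1 * INR N ^ N)) by (unfold B, Bc; ring).
    apply Fz_B1; auto. assert (v <= r) by auto. lra.
    assert (v <= r) by auto. assert (0 <= INR N) by apply pos_INR. nra. }
  assert (Hexpl : exp (- lam) * (2 * B) = t / INR d).
  { unfold lam. rewrite exp_Ropp, exp_ln by lra. unfold X. field. repeat split; lra. }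
  rewrite Hexpl in Hprod.
  assert (Hpow : (1 + t / INR d) ^ d <= exp t).
  { apply Rle_trans with (exp (t / INR d) ^ d).
    apply pow_incr. split. assert (0 <= t / INR d) by (apply Rmult_le_pos; [lra| left; apply Rinv_0_lt_compat; lra]). lra.
    apply exp_ineq1_le.
    rewrite <- exp_INR_mul. right. f_equal. field. lra. }
  assert (Hlam : lam <= ln (4 * B) + 2 / dl + 2 * q).
  { unfold lam. rewrite HX.
    assert (Hy0 : 0 < y) by lra.
    assert (Hc0 : 0 < 2 * B / (dl ^ 2 * ln 2)) by (apply Rdiv_lt_0_compat; nra).
    rewrite ln_mult by nra. rewrite ln_mult by nra.
    assert (ln y <= q) by (unfold q; apply ln_le; lra).
    assert (ln q <= q) by (pose proof (ln_le_sub1 q ltac:(lra)); lra).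
    assert (ln (2 * B / (dl ^ 2 * ln 2)) <= ln (4 * B) + 2 / dl).
    { apply Rle_trans with (ln (4 * B / dl ^ 2)).
      - apply ln_le; auto. unfold Rdiv. rewrite Rinv_mult.
        assert (/ ln 2 <= 2). { apply Rle_trans with (/ (1/2)). apply Rinv_le_contravar; lra. lra. }
        assert (0 < / dl ^ 2) by (apply Rinv_0_lt_compat; auto).
        replace (2 * B * (/ dl ^ 2 * / ln 2)) with ((2 * B * / dl ^ 2) * / ln 2) by ring.
        apply Rle_trans with ((2 * B * / dl ^ 2) * 2). apply Rmult_le_compat_l; [|lra].
        apply Rmult_le_pos; lra. right; ring.
      - rewrite ln_div by (try lra; auto). rewrite ln_pow by lra.
        assert (- ln dl <= / dl).
        { rewrite <- ln_Rinv by lra. pose proof (ln_le_sub1 (/ dl) (Rinv_0_lt_compat _ Hd0)). lra. }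
        simpl INR. unfold Rdiv. lra. }
    lra. }
  assert (Hkey : lam * t + t < L).
  { assert (t * (ln (4 * B) + 1) = L / q * (dl / 100)).
    { assert (E1 : dl * (1 + ln (4 * B)) = / 100).
      { replace (dl * (1 + ln (4 * B))) with (dl * (100 * (1 + ln (4 * B))) / 100) by field.
        rewrite Hdeq. field. }
      replace (t * (ln (4 * B) + 1)) with (L / q * dl * (dl * (1 + ln (4 * B)))) by (unfold t; rewrite Heps; field; lra).
      rewrite E1. unfold Rdiv. ring. }
    assert (t * (2 / dl) = L / q * (2 * dl)) by (unfold t; rewrite Heps; field; lra).
    assert (t * q = dl ^ 2 * L) by (unfold t; rewrite Heps; field; lra).
    assert (L / q <= L * (8 / 3)).
    { unfold Rdiv at 1. apply Rmult_le_compat_l; [lra|]. apply Rle_trans with (/ (3/8)). apply Rinv_le_contravar; lra. right; field. }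
    assert (0 <= L / q) by (apply Rmult_le_pos; [lra| left; apply Rinv_0_lt_compat; lra]).
    assert (dl ^ 2 <= dl / 100) by (simpl; nra).
    assert (lam * t <= t * (ln (4 * B) + 2 / dl + 2 * q)) by nra.
    nra. }
  assert (INR (length S) < INR n).
  { eapply Rle_lt_trans. apply HSc.
    apply Rle_lt_trans with (exp (lam * (t - 1)) * exp t).
    apply Rmult_le_compat_l. left; apply exp_pos. lra.
    rewrite <- exp_plus. unfold L in Hkey. rewrite <- (exp_ln (INR n)) by lra.
    apply exp_increasing. nra. }
  apply INR_lt in H3. lia.
Qed.

Definition Sinv (Rs : list R) : R := fold_right (fun r s => / r + s) 0 Rs.

Lemma gR_Sinv Rs : gR Rs = / Sinv Rs.
Proof. reflexivity. Qed.

Lemma Sinv_bounds v u Rs : 0 < v <= u -> (forall r, In r Rs -> v <= r <= u) ->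
  INR (length Rs) / u <= Sinv Rs <= INR (length Rs) / v.
Proof.
  intros Hvu. induction Rs as [|r Rs IH]; intros H. unfold Sinv; simpl. unfold Rdiv; lra.
  destruct IH as [I1 I2]. intros; apply H; simpl; auto.
  destruct (H r) as [Hr1 Hr2]. simpl; auto.
  change (Sinv (r :: Rs)) with (/ r + Sinv Rs). change (length (r :: Rs)) with (S (length Rs)).
  rewrite S_INR. unfold Rdiv in *.
  assert (/ u <= / r) by (apply Rinv_le_contravar; lra).
  assert (/ r <= / v) by (apply Rinv_le_contravar; lra).
  fold (Sinv Rs). split; nra.
Qed.

Lemma fold_B2 (M lam : R) Rs : 0 < lam ->
  fold_right (fun r p => (M * Rpower lam (- / (2 * r))) * p) 1 Rs =
  M ^ length Rs * exp (- (Sinv Rs / 2) * ln lam).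
Proof.
  intros Hl. induction Rs as [|r Rs IH]; simpl.
  - unfold Sinv; simpl. replace (- (0 / 2) * ln lam) with 0 by (unfold Rdiv; ring). rewrite exp_0. ring.
  - rewrite IH. unfold Rpower. fold (Sinv Rs).
    replace (- ((/ r + Sinv Rs) / 2) * ln lam) with (- / (2 * r) * ln lam + - (Sinv Rs / 2) * ln lam)
      by (rewrite Rinv_mult; unfold Rdiv; ring).
    rewrite exp_plus. ring.
Qed.

Definition Mc (N : nat) : R := 9 + 8 * INR N ^ N.
Definition epsH (u : R) (N : nat) : R := exp (- 2 * u * ln (2 * Mc N)) / (2 * exp 1 * u).
Definition lnQ (v u : R) (N : nat) : R := ln (/ (2 * v * epsH u N)) / (2 * v).

Lemma Mc_ge N : 9 <= Mc N.
Proof. unfold Mc. pose proof (pow_le (INR N) N (pos_INR N)). lra. Qed.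

Lemma epsH_props v u N : 0 < v <= u -> 0 < epsH u N /\ 2 * v * epsH u N <= 1.
Proof.
  intros Hvu. pose proof (Mc_ge N). pose proof (exp_pos 1).
  assert (1 <= exp 1) by (pose proof (exp_ineq1_le 1); lra).
  assert (0 < ln (2 * Mc N)) by (apply ln_pos'; lra).
  assert (exp (- 2 * u * ln (2 * Mc N)) <= 1).
  { rewrite <- exp_0. apply exp_le_exp. nra. }
  pose proof (exp_pos (- 2 * u * ln (2 * Mc N))).
  unfold epsH. split.
  - apply Rdiv_lt_0_compat; nra.
  - apply Rle_trans with (2 * v * (1 / (2 * exp 1 * u))).
    apply Rmult_le_compat_l. lra. unfold Rdiv. apply Rmult_le_compat_r. left; apply Rinv_0_lt_compat; nra. lra.
    apply Rle_trans with (2 * v * (1 / (2 * u))).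
    apply Rmult_le_compat_l. lra. unfold Rdiv. rewrite !Rmult_1_l. apply Rinv_le_contravar; nra.
    replace (2 * v * (1 / (2 * u))) with (v / u) by (field; intro; lra).
    apply Rmult_le_reg_r with u; [lra|]. unfold Rdiv; rewrite Rmult_assoc, Rinv_l; lra.
Qed.

Lemma upper_H v u N Rs d n : 0 < v <= u -> (1 <= N)%nat -> 2 <= 2 * v * INR N -> (1 <= d)%nat ->
  length Rs = d -> (forall r, In r Rs -> v <= r <= u) -> (1 <= n)%nat ->
  INR d * lnQ v u N <= ln (INR n) ->
  exists S : list (Zd d), NoDup S /\ (length S <= n - 1)%nat /\
    forall k, ~ In k S -> epsH u N * INR d * Rpower (INR n) (2 * gR Rs) <= weight Rs (proj1_sig k).
Proof.
  intros Hvu HN HvN Hd HRl HRs Hn HQ.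
  assert (HdR : 1 <= INR d) by (apply (le_INR 1); auto).
  assert (HnR : 1 <= INR n) by (apply (le_INR 1); auto).
  destruct (Sinv_bounds v u Rs Hvu HRs) as [Sv1 Sv2]. rewrite HRl in Sv1, Sv2.
  set (Sv := Sinv Rs) in *.
  assert (HSv : 0 < Sv). { eapply Rlt_le_trans; [|apply Sv1]. apply Rdiv_lt_0_compat; lra. }
  set (g := gR Rs). assert (Hg : g = / Sv) by reflexivity.
  assert (Hgd1 : v <= g * INR d).
  { rewrite Hg. apply Rmult_le_reg_r with Sv; auto. replace (/ Sv * INR d * Sv) with (INR d) by (field; lra).
    apply Rmult_le_reg_r with (/ v). apply Rinv_0_lt_compat; lra.
    replace (v * Sv * / v) with Sv by (field; lra). auto. }
  assert (Hgd2 : g * INR d <= u).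
  { rewrite Hg. apply Rmult_le_reg_r with Sv; auto. replace (/ Sv * INR d * Sv) with (INR d) by (field; lra).
    apply Rmult_le_reg_r with (/ u). apply Rinv_0_lt_compat; lra.
    replace (u * Sv * / u) with Sv by (field; lra). auto. }
  assert (Hg0 : 0 < g) by (rewrite Hg; apply Rinv_0_lt_compat; auto).
  destruct (epsH_props v u N Hvu) as [He0 He1].
  set (e' := epsH u N) in *.
  set (Ln := ln (INR n)).
  assert (HLn : 0 <= Ln) by (unfold Ln; rewrite <- ln_1; apply ln_le; lra).
  assert (HlnQ : 0 <= lnQ v u N).
  { unfold lnQ. fold e'. apply Rmult_le_pos. rewrite <- ln_1. apply ln_le. lra.
    rewrite <- Rinv_1. apply Rinv_le_contravar; nra. left; apply Rinv_0_lt_compat; lra. }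
  assert (HQv : ln (/ (2 * v * e')) <= 2 * g * Ln).
  { assert (2 * v * lnQ v u N = ln (/ (2 * v * e'))) by (unfold lnQ; fold e'; field; lra).
    assert (2 * v * lnQ v u N <= 2 * (g * INR d) * lnQ v u N) by nra.
    assert (2 * (g * INR d) * lnQ v u N <= 2 * g * Ln) by (unfold Ln; nra). lra. }
  set (t := e' * INR d * Rpower (INR n) (2 * g)).
  assert (Ht_exp : t = e' * INR d * exp (2 * g * Ln)) by reflexivity.
  assert (Hexpg : / (2 * v * e') <= exp (2 * g * Ln)).
  { rewrite <- (exp_ln (/ (2 * v * e'))). apply exp_le_exp; auto. apply Rinv_0_lt_compat; nra. }
  assert (Ht : 0 < t) by (rewrite Ht_exp; apply Rmult_lt_0_compat; [apply Rmult_lt_0_compat; lra| apply exp_pos]).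
  set (s := Sv / 2).
  assert (Hs : 0 < s) by (unfold s; lra).
  assert (Hst : s <= t).
  { rewrite Ht_exp. apply Rle_trans with (e' * INR d * / (2 * v * e')).
    - replace (e' * INR d * / (2 * v * e')) with (INR d / v / 2) by (field; split; intro; lra).
      unfold s. lra.
    - apply Rmult_le_compat_l; auto. nra. }
  set (lam := s / t).
  assert (Hlam : 0 < lam <= 1).
  { unfold lam. split. apply Rdiv_lt_0_compat; auto.
    apply Rmult_le_reg_r with t; auto. unfold Rdiv. rewrite Rmult_assoc, Rinv_l; lra. }
  destruct (upper_construct Rs d v t lam HRl ltac:(lra) (fun r Hr => proj1 (HRs r Hr)) Ht ltac:(lra))
    as [K [S [HSn [HSw HSc]]]].
  exists S. split; auto. split; [|auto].
  set (M := Mc N).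
  assert (Hprod : fold_right (fun r p => Fz lam K r * p) 1 Rs <= M ^ d * exp (- (Sv / 2) * ln lam)).
  { rewrite <- HRl. unfold Sv. rewrite <- fold_B2 by lra. apply fold_prod_le. intros r Hr.
    destruct (HRs r Hr). split. apply Fz_nonneg. apply Fz_B2; auto. lra.
    assert (0 <= INR N) by apply pos_INR. nra. }
  assert (HM : 9 <= M) by apply Mc_ge.
  assert (HMd : M ^ d = exp (INR d * ln M)) by (rewrite exp_INR_mul, exp_ln; lra).
  assert (Hlnts : - (Sv / 2) * ln lam = s * (ln (2 * e' * (g * INR d)) + 2 * g * Ln)).
  { unfold lam. rewrite ln_div by lra. fold s.
    assert (Et1 : ln t = ln (e' * INR d) + 2 * g * Ln).
    { rewrite Ht_exp, ln_mult, ln_exp; auto. apply Rmult_lt_0_compat; lra. apply exp_pos. }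
    assert (Hp1 : 0 < 2 * e' * (g * INR d)) by (apply Rmult_lt_0_compat; lra).
    assert (Et2 : ln (2 * e' * (g * INR d)) + ln s = ln (e' * INR d)).
    { rewrite <- ln_mult by auto. f_equal. unfold s. rewrite Hg. field. lra. }
    assert (Et : ln t = ln (2 * e' * (g * INR d)) + 2 * g * Ln + ln s) by lra.
    rewrite Et. unfold s. ring. }
  assert (Hsg : s * (2 * g) = 1) by (unfold s; rewrite Hg; field; lra).
  assert (Hln2e : 1 + ln (2 * e' * (g * INR d)) <= - 2 * u * ln (2 * M)).
  { assert (E : - 2 * u * ln (2 * M) = 1 + ln (2 * e' * u)).
    { unfold e', epsH. fold M. replace (2 * (exp (- 2 * u * ln (2 * M)) / (2 * exp 1 * u)) * u) with
        (exp (- 2 * u * ln (2 * M)) / exp 1) by (field; split; [intro; lra| apply Rgt_not_eq, exp_pos]).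
      rewrite ln_div by apply exp_pos. rewrite !ln_exp. ring. }
    rewrite E. apply Rplus_le_compat_l. apply ln_le. nra. nra. }
  assert (HsL : s * (- 2 * u * ln (2 * M)) <= - INR d * ln (2 * M)).
  { assert (0 < ln (2 * M)) by (apply ln_pos'; lra).
    assert (INR d / (2 * u) <= s).
    { replace (INR d / (2 * u)) with ((INR d / u) / 2) by (field; intro; lra). unfold s. lra. }
    replace (- INR d * ln (2 * M)) with ((INR d / (2 * u)) * (- 2 * u * ln (2 * M))) by (field; intro; lra).
    rewrite (Rmult_comm s), (Rmult_comm (INR d / (2 * u))). apply Rmult_le_compat_neg_l; auto. nra. }
  assert (Hfin : INR (length S) <= exp (Ln - ln 2)).
  { eapply Rle_trans. apply HSc.
    apply Rle_trans with (exp (lam * (t - 1)) * (M ^ d * exp (- (Sv / 2) * ln lam))).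
    apply Rmult_le_compat_l; auto. left; apply exp_pos.
    rewrite HMd, <- !exp_plus. apply exp_le_exp. rewrite Hlnts.
    assert (lam * t = s) by (unfold lam; field; lra).
    assert (s * (2 * g * Ln) = Ln) by (replace (s * (2 * g * Ln)) with ((s * (2 * g)) * Ln) by ring; rewrite Hsg; ring).
    assert (s * (1 + ln (2 * e' * (g * INR d))) <= s * (- 2 * u * ln (2 * M))) by (apply Rmult_le_compat_l; lra).
    assert (0 < ln 2) by (apply ln_pos'; lra).
    assert (ln (2 * M) = ln 2 + ln M) by (apply ln_mult; lra).
    nra. }
  assert (INR (length S) < INR n).
  { eapply Rle_lt_trans. apply Hfin. unfold Rminus. rewrite exp_plus. unfold Ln. rewrite exp_ln by lra.
    rewrite exp_Ropp, exp_ln by lra. lra. }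
  apply INR_lt in H. lia.
Qed.

Lemma lower_blocks Rs d m b n : (m * b <= d)%nat -> (n <= b ^ m)%nat ->
  exists T : list (Zd d), NoDup T /\ (n <= length T)%nat /\
    forall k, In k T -> weight Rs (proj1_sig k) <= 1 + INR m.
Proof.
  intros Hmb Hn. exists (map (toZd d) (padblocks d m b)). split; [|split].
  - apply toZd_NoDup. apply padblocks_NoDup. intros k Hk. apply (padblocks_prop d m b k Hmb Hk).
  - rewrite length_map, padblocks_length. auto.
  - intros k Hk. apply in_map_iff in Hk. destruct Hk as [k0 [<- Hk0]].
    destruct (padblocks_prop d m b k0 Hmb Hk0) as [H1 [H2 H3]].
    rewrite toZd_val by auto. rewrite weight_ws. pose proof (ws_01 Rs k0 H2). lra.
Qed.

Lemma lower_box Rs d Ks n : length Ks = d -> (n <= boxcount Ks)%nat -> (forall r, In r Rs -> 0 <= r) ->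
  exists T : list (Zd d), NoDup T /\ (n <= length T)%nat /\
    forall k, In k T -> weight Rs (proj1_sig k) <=
      1 + fold_right (fun p s => rpow0 (INR (fst p)) (2 * snd p) + s) 0 (combine Ks Rs).
Proof.
  intros HKs Hn HR. exists (map (toZd d) (boxv Ks)). split; [|split].
  - apply toZd_NoDup. apply boxv_NoDup. intros k Hk. rewrite (boxv_len _ _ Hk). auto.
  - rewrite length_map, boxv_length. auto.
  - intros k Hk. apply in_map_iff in Hk. destruct Hk as [k0 [<- Hk0]].
    rewrite toZd_val by (rewrite (boxv_len _ _ Hk0); auto).
    rewrite weight_ws. apply boxv_In in Hk0. pose proof (ws_box Rs Ks k0 Hk0 HR). lra.
Qed.

Lemma boxcount_repeat1 d : boxcount (repeat 1%nat d) = (3 ^ d)%nat.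
Proof. induction d; simpl; try rewrite IHd; lia. Qed.

Lemma fold_ones Rs d : length Rs = d ->
  fold_right (fun p s => rpow0 (INR (fst p)) (2 * snd p) + s) 0 (combine (repeat 1%nat d) Rs) = INR d.
Proof.
  revert d; induction Rs; intros d Hd; simpl in Hd; subst; simpl. auto.
  rewrite IHRs by auto. unfold rpow0. destruct Req_EM_T. lra. rewrite Rpower_1_base.
  destruct (length Rs); simpl; ring.
Qed.

Lemma lower_ones Rs d : length Rs = d -> (forall r, In r Rs -> 0 <= r) ->
  exists T : list (Zd d), NoDup T /\ (3 ^ d <= length T)%nat /\
    forall k, In k T -> weight Rs (proj1_sig k) <= 1 + INR d.
Proof.
  intros Hd HR. destruct (lower_box Rs d (repeat 1%nat d) (3 ^ d)) as [T [H1 [H2 H3]]]; auto.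
  apply repeat_length. rewrite boxcount_repeat1; auto.
  exists T. split; auto. split; auto. intros k Hk. rewrite <- (fold_ones Rs d Hd). auto.
Qed.

Definition Kf (n : nat) (g r : R) : nat := Kceil ((Rpower (INR n) (g / r) - 1) / 2).

Lemma boxcount_map (f : R -> nat) Rs :
  INR (boxcount (map f Rs)) = fold_right (fun r p => INR (2 * f r + 1) * p) 1 Rs.
Proof. induction Rs; simpl; auto. rewrite mult_INR, IHRs. auto. Qed.

Lemma fold_combine_map (f : R -> nat) (h : R -> R) Rs :
  fold_right (fun p s => rpow0 (INR (fst p)) (2 * snd p) + s) 0 (combine (map f Rs) Rs) =
  fold_right (fun r s => rpow0 (INR (f r)) (2 * r) + s) 0 Rs.
Proof. induction Rs; simpl; auto. rewrite IHRs. auto. Qed.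

Lemma lower_H Rs d n : (1 <= d)%nat -> length Rs = d -> (forall r, In r Rs -> 0 < r) -> (1 <= n)%nat ->
  exists T : list (Zd d), NoDup T /\ (n <= length T)%nat /\
    forall k, In k T -> weight Rs (proj1_sig k) <= 1 + INR d * Rpower (INR n) (2 * gR Rs).
Proof.
  intros Hd HRl HR Hn.
  assert (HnR : 1 <= INR n) by (apply (le_INR 1); auto).
  set (g := gR Rs).
  assert (HSv : 0 < Sinv Rs).
  { destruct Rs as [|r0 Rs']. simpl in HRl; lia.
    clear -HR. induction Rs' as [|r Rs IH]. unfold Sinv; simpl. assert (0 < r0) by (apply HR; simpl; auto).
    pose proof (Rinv_0_lt_compat r0 H). lra.
    change (Sinv (r0 :: r :: Rs)) with (/ r0 + (/ r + Sinv Rs)).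
    assert (0 < r0) by (apply HR; simpl; auto). assert (0 < r) by (apply HR; simpl; auto).
    assert (0 <= Sinv Rs).
    { clear -HR. induction Rs. unfold Sinv; simpl; lra. change (Sinv (a :: Rs)) with (/ a + Sinv Rs).
      assert (0 < a) by (apply HR; simpl; auto). pose proof (Rinv_0_lt_compat a H).
      assert (0 <= Sinv Rs) by (apply IHRs; intros; apply HR; simpl in *; tauto). lra. }
    pose proof (Rinv_0_lt_compat r0 H). pose proof (Rinv_0_lt_compat r H0). lra. }
  assert (Hg : g * Sinv Rs = 1) by (unfold g; rewrite gR_Sinv; field; lra).
  set (a := fun r => Rpower (INR n) (g / r)).
  assert (Ha1 : forall r, In r Rs -> 1 <= a r).
  { intros r Hr. unfold a. apply Rpower_ge1; auto. unfold Rdiv. apply Rmult_le_pos.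
    unfold g; rewrite gR_Sinv; left; apply Rinv_0_lt_compat; auto.
    left; apply Rinv_0_lt_compat; auto. }
  assert (HK : forall r, In r Rs -> a r <= INR (2 * Kf n g r + 1) /\ INR (Kf n g r) <= a r).
  { intros r Hr. pose proof (Ha1 r Hr).
    assert (HKc : (a r - 1) / 2 <= INR (Kf n g r) <= (a r - 1) / 2 + 1).
    { unfold Kf. apply Kceil_spec. lra. }
    rewrite plus_INR, mult_INR. replace (INR 2) with 2 by (simpl; lra). replace (INR 1) with 1 by (simpl; lra).
    split; lra. }
  destruct (lower_box Rs d (map (Kf n g) Rs) n) as [T [H1 [H2 H3]]].
  - rewrite length_map; auto.
  - apply INR_le. rewrite boxcount_map.
    assert (Hprod : forall Rs', (forall r, In r Rs' -> In r Rs) ->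
              exp (g * Sinv Rs' * ln (INR n)) <= fold_right (fun r p => INR (2 * Kf n g r + 1) * p) 1 Rs').
    { induction Rs' as [|r Rs' IH]; intros Hsub.
      - unfold Sinv; simpl. rewrite Rmult_0_r, Rmult_0_l, exp_0. lra.
      - change (Sinv (r :: Rs')) with (/ r + Sinv Rs'). simpl.
        replace (g * (/ r + Sinv Rs') * ln (INR n)) with ((g / r) * ln (INR n) + g * Sinv Rs' * ln (INR n)) by (unfold Rdiv; ring).
        rewrite exp_plus. apply Rmult_le_compat. left; apply exp_pos. left; apply exp_pos.
        destruct (HK r (Hsub r (or_introl eq_refl))). auto.
        apply IH. intros; apply Hsub; simpl; auto. }
    eapply Rle_trans. 2: apply Hprod; auto. rewrite Hg, Rmult_1_l, exp_ln by lra. lra.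
  - intros r Hr. left; auto.
  - exists T. split; auto. split; auto. intros k Hk. eapply Rle_trans. apply H3; auto.
    rewrite fold_combine_map by exact (fun x => x). apply Rplus_le_compat_l.
    assert (Hsum : forall Rs', (forall r, In r Rs' -> In r Rs) ->
      fold_right (fun r s => rpow0 (INR (Kf n g r)) (2 * r) + s) 0 Rs' <= INR (length Rs') * Rpower (INR n) (2 * g)).
    { induction Rs' as [|r Rs' IH]; intros Hsub. simpl; lra.
      change (length (r :: Rs')) with (S (length Rs')). rewrite S_INR. simpl.
      assert (Hr : In r Rs) by (apply Hsub; simpl; auto).
      assert (rpow0 (INR (Kf n g r)) (2 * r) <= Rpower (INR n) (2 * g)).
      { destruct (HK r Hr) as [_ HKr]. pose proof (Ha1 r Hr). assert (0 < r) by auto.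
        apply Rle_trans with (rpow0 (a r) (2 * r)). apply rpow0_mono. split; [apply pos_INR| auto]. lra.
        unfold rpow0. destruct Req_EM_T. lra. unfold a. rewrite Rpower_mult. right. f_equal. field. lra. }
      assert (fold_right (fun r s => rpow0 (INR (Kf n g r)) (2 * r) + s) 0 Rs' <= INR (length Rs') * Rpower (INR n) (2 * g))
        by (apply IH; intros; apply Hsub; simpl; auto).
      lra. }
    rewrite <- HRl. apply Hsum; auto.
Qed.

Lemma sq_lower c ph tau : 0 < tau -> 0 <= ph -> 0 <= c -> c * c * (ph * ph) * tau <= 1 -> c * ph <= / sqrt tau.
Proof.
  intros Ht Hp Hc H. rewrite <- sqrt_inv. rewrite <- (sqrt_square (c * ph)) by nra.
  apply sqrt_le_1_alt. apply Rmult_le_reg_r with tau; auto. rewrite Rinv_l by lra. nra.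
Qed.

Lemma sq_upper C ph t : 0 < t -> 0 <= ph -> 0 <= C -> 1 <= C * C * (ph * ph) * t -> / sqrt t <= C * ph.
Proof.
  intros Ht Hp HC H. rewrite <- sqrt_inv. rewrite <- (sqrt_square (C * ph)) by nra.
  apply sqrt_le_1_alt. apply Rmult_le_reg_r with t; auto. rewrite Rinv_l by lra. nra.
Qed.

Lemma final_combine Rs d n (S T : list (Zd d)) t tau c C ph :
  (1 <= n)%nat -> NoDup S -> (length S <= n - 1)%nat -> 0 < t ->
  (forall k, ~ In k S -> t <= weight Rs (proj1_sig k)) ->
  NoDup T -> (n <= length T)%nat -> 0 < tau ->
  (forall k, In k T -> weight Rs (proj1_sig k) <= tau) ->
  c * ph <= / sqrt tau -> / sqrt t <= C * ph ->
  exists a, approx_number_is Rs d n a /\ c * ph <= a <= C * ph.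
Proof.
  intros. destruct (an_bounds Rs d n S T t tau) as [a [Ha [H11 H12]]]; auto.
  exists a. split; auto. split; lra.
Qed.

Lemma case_small Rs d n C : (1 <= n)%nat -> (n <= d)%nat -> 1 <= C ->
  exists a, approx_number_is Rs d n a /\ (1/32) * 1 <= a <= C * 1.
Proof.
  intros Hn Hnd HC.
  destruct (lower_blocks Rs d 1 d n) as [T [HT1 [HT2 HT3]]]; [lia| simpl; lia|].
  assert (A1 : NoDup ([] : list (Zd d))) by constructor.
  assert (A2 : (length ([] : list (Zd d)) <= n - 1)%nat) by (simpl; lia).
  assert (A3 : forall k : Zd d, ~ In k [] -> 1 <= weight Rs (proj1_sig k)) by (intros; apply weight_ge1).
  assert (A4 : forall k, In k T -> weight Rs (proj1_sig k) <= 2).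
  { intros k Hk. specialize (HT3 k Hk). change (INR 1) with 1 in HT3. lra. }
  assert (A5 : 1/32 * 1 <= / sqrt 2) by (apply sq_lower; lra).
  assert (A6 : / sqrt 1 <= C * 1) by (rewrite sqrt_1; lra).
  exact (final_combine Rs d n [] T 1 2 (1/32) C 1 Hn A1 A2 ltac:(lra) A3 HT1 HT2 ltac:(lra) A4 A5 A6).
Qed.

Lemma log2_ratio d n : 1 < INR n ->
  log2 (1 + INR d / log2 (INR n)) / log2 (INR n) =
  ln (1 + INR d * ln 2 / ln (INR n)) / ln (INR n).
Proof.
  intros Hn. pose proof ln2_gt. assert (0 < ln (INR n)) by (apply ln_pos'; auto).
  unfold log2. replace (INR d / (ln (INR n) / ln 2)) with (INR d * ln 2 / ln (INR n)) by (field; split; intro; lra).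
  field. split; intro; lra.
Qed.

Lemma case_mid v u N Rs d n C : 0 < v <= u -> (1 <= N)%nat -> 2 <= 2 * v * INR N -> (1 <= d)%nat ->
  length Rs = d -> (forall r, In r Rs -> v <= r <= u) -> (d < n)%nat -> (n <= 3 ^ d)%nat ->
  / sqrt (eps N) <= C ->
  exists a, approx_number_is Rs d n a /\
    (1/32) * sqrt (log2 (1 + INR d / log2 (INR n)) / log2 (INR n)) <= a <=
    C * sqrt (log2 (1 + INR d / log2 (INR n)) / log2 (INR n)).
Proof.
  intros Hvu HN HvN Hd HRl HRs Hdn Hn3 HC.
  assert (HdR : 1 <= INR d) by (apply (le_INR 1); auto).
  assert (HnR : 2 <= INR n) by (apply (le_INR 2); lia).
  assert (Hnd : INR d + 1 <= INR n) by (rewrite <- S_INR; apply le_INR; lia).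
  pose proof ln2_gt. pose proof ln2_lt. pose proof ln3_ge.
  set (L := ln (INR n)).
  assert (HL : 0 < L) by (apply ln_pos'; lra).
  assert (HL2 : ln 2 <= L) by (apply ln_le; lra).
  set (y := INR d * ln 2 / L).
  assert (Hy0 : 0 < y) by (unfold y; apply Rdiv_lt_0_compat; nra).
  assert (HyL : y * L = INR d * ln 2) by (unfold y; field; lra).
  set (q := ln (1 + y)).
  assert (Hq0 : 0 < q) by (apply ln_pos'; lra).
  assert (Hqy : q <= y) by (pose proof (ln_le_sub1 (1 + y) ltac:(lra)); fold q in H2; lra).
  rewrite log2_ratio by lra. fold L. fold y. fold q.
  set (ph := sqrt (q / L)).
  assert (Hph : ph * ph = q / L) by (apply sqrt_sqrt; apply Rlt_le, Rdiv_lt_0_compat; auto).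
  assert (Hph0 : 0 <= ph) by apply sqrt_pos.
  destruct (dlt_props N HN) as [[Hd0 Hd1] _].
  assert (Heps : 0 < eps N) by (unfold eps; apply pow_lt; auto).
  assert (HC0 : 0 < C).
  { eapply Rlt_le_trans; [|apply HC]. apply Rinv_0_lt_compat, sqrt_lt_R0; auto. }
  destruct (upper_M v N Rs d n) as [S [HS1 [HS2 HS3]]]; auto; try lra; try lia.
  intros r Hr; apply HRs; auto.
  set (t := tM N d n) in *.
  assert (Ht : t = eps N * L / q) by reflexivity.
  assert (Ht0 : 0 < t) by (rewrite Ht; apply Rdiv_lt_0_compat; [apply Rmult_lt_0_compat|]; auto).
  assert (Hup : / sqrt t <= C * ph).
  { apply sq_upper; auto; try lra. rewrite Hph, Ht.
    replace (C * C * (q / L) * (eps N * L / q)) with (C * C * eps N) by (field; split; intro; lra).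
    assert (/ sqrt (eps N) * / sqrt (eps N) = / eps N).
    { rewrite <- Rinv_mult. rewrite sqrt_sqrt; lra. }
    assert (/ eps N <= C * C).
    { rewrite <- H2. apply Rmult_le_compat; auto; left; apply Rinv_0_lt_compat, sqrt_lt_R0; auto. }
    apply Rmult_le_reg_r with (/ eps N). apply Rinv_0_lt_compat; auto.
    rewrite Rmult_assoc, Rinv_r by lra. lra. }
  destruct (Rle_dec (16 * L) (INR d)) as [HxA|HxB].
  -
    set (x := INR d / L).
    assert (Hx16 : 16 <= x) by (unfold x; apply Rmult_le_reg_r with L; auto; unfold Rdiv; rewrite Rmult_assoc, Rinv_l; lra).
    set (lx := ln x).
    assert (Hlx2 : 2 <= lx).
    { unfold lx. rewrite <- (ln_exp 2). apply ln_le. apply exp_pos.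
      replace 2 with (1 + 1) by ring. rewrite exp_plus. pose proof exp_le_3. pose proof (exp_pos 1). nra. }
    assert (HlxL : lx <= 2 * L).
    { unfold lx, L. replace (2 * ln (INR n)) with (ln (INR n ^ 2)) by (rewrite ln_pow by lra; simpl; ring).
      apply ln_le. lra. unfold x. apply Rmult_le_reg_r with L; auto. unfold Rdiv. rewrite Rmult_assoc, Rinv_l by lra.
      nra. }
    set (m := Kceil (2 * L / lx)).
    destruct (Kceil_spec (2 * L / lx)) as [Hm1 Hm2]. apply Rlt_le, Rdiv_lt_0_compat; lra. fold m in Hm1, Hm2.
    assert (H1L : 1 <= 2 * L / lx).
    { apply Rmult_le_reg_r with lx. lra. unfold Rdiv. rewrite Rmult_assoc, Rinv_l; lra. }
    assert (Hm0 : 1 <= INR m) by lra.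
    assert (Hm4 : INR m <= 4 * L / lx) by (unfold Rdiv in *; lra).
    set (b := Kfloor (INR d / INR m)).
    destruct (Kfloor_spec (INR d / INR m)) as [Hb1 Hb2]. apply Rlt_le, Rdiv_lt_0_compat; lra. fold b in Hb1, Hb2.
    assert (Hdm : x / 2 <= INR d / INR m).
    { apply Rle_trans with (INR d / (4 * L / lx)).
      - unfold x. replace (INR d / (4 * L / lx)) with (INR d / L * lx / 4) by (field; split; intro; lra).
        unfold x in Hx16. nra.
      - unfold Rdiv. apply Rmult_le_compat_l. lra. apply Rinv_le_contravar; lra. }
    assert (Hsx : sqrt x <= INR b).
    { assert (Hs : sqrt x * sqrt x = x) by (apply sqrt_sqrt; lra).
      assert (4 <= sqrt x). { rewrite <- (sqrt_square 4) by lra. apply sqrt_le_1_alt. lra. }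
      nra. }
    assert (Hb0 : 0 < INR b) by (pose proof (sqrt_pos x); assert (0 < sqrt x) by (apply sqrt_lt_R0; lra); lra).
    assert (Hlnb : lx / 2 <= ln (INR b)).
    { apply Rle_trans with (ln (sqrt x)).
      - unfold lx. rewrite <- (sqrt_sqrt x) at 1 by lra. rewrite ln_mult by (apply sqrt_lt_R0; lra). lra.
      - apply ln_le; auto. apply sqrt_lt_R0; lra. }
    assert (HmlnB : L <= INR m * ln (INR b)).
    { apply Rle_trans with ((2 * L / lx) * (lx / 2)).
      right. field. lra. apply Rmult_le_compat; try lra. }
    assert (Hnb : (n <= b ^ m)%nat).
    { apply INR_le. rewrite pow_INR. rewrite <- (exp_ln (INR n)) by lra. rewrite <- (exp_ln (INR b)) by lra.
      rewrite <- exp_INR_mul. apply exp_le_exp. fold L. lra. }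
    assert (Hmb : (m * b <= d)%nat).
    { apply INR_le. rewrite mult_INR. apply Rmult_le_reg_r with (/ INR m). apply Rinv_0_lt_compat; lra.
      replace (INR m * INR b * / INR m) with (INR b) by (field; intro; lra). auto. }
    destruct (lower_blocks Rs d m b n Hmb Hnb) as [T [HT1 [HT2 HT3]]].
    assert (Hlow : 1 / 32 * ph <= / sqrt (1 + INR m)).
    { apply sq_lower; try lra. rewrite Hph.
      assert (Hq2 : q <= 2 * lx).
      { unfold q, lx. replace (2 * ln x) with (ln (x ^ 2)) by (rewrite ln_pow by lra; simpl; ring).
        apply ln_le. lra.
        assert (y <= x).
        { unfold y, x. unfold Rdiv. assert (0 <= INR d * / L) by (apply Rmult_le_pos; [lra| left; apply Rinv_0_lt_compat; lra]).
          replace (INR d * ln 2 * / L) with ((INR d * / L) * ln 2) by ring. nra. }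
        nra. }
      assert (1 + INR m <= 8 * L / lx) by (unfold Rdiv in *; lra).
      assert (q / L * (1 + INR m) <= 16).
      { apply Rle_trans with (q / L * (8 * L / lx)).
        apply Rmult_le_compat_l. apply Rlt_le, Rdiv_lt_0_compat; auto. auto.
        replace (q / L * (8 * L / lx)) with (8 * q / lx) by (field; split; intro; lra).
        apply Rmult_le_reg_r with lx. lra. unfold Rdiv. rewrite Rmult_assoc, Rinv_l by lra. lra. }
      assert (0 <= q / L) by (apply Rlt_le, Rdiv_lt_0_compat; auto). nra. }
    apply (final_combine Rs d n S T t (1 + INR m) (1/32) C ph); auto; try lia; try lra.
  -
    destruct (lower_ones Rs d HRl) as [T [HT1 [HT2 HT3]]].
    { intros r Hr. destruct (HRs r Hr). lra. }
    assert (Hlow : 1 / 32 * ph <= / sqrt (1 + INR d)).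
    { apply sq_lower; try lra. rewrite Hph.
      assert (q <= 16).
      { apply Rle_trans with y; auto. unfold y. apply Rmult_le_reg_r with L; auto.
        unfold Rdiv. rewrite Rmult_assoc, Rinv_l by lra. nra. }
      assert (q / L * (1 + INR d) <= 512).
      { apply Rle_trans with (16 / L * (2 * INR d)).
        apply Rmult_le_compat. apply Rlt_le, Rdiv_lt_0_compat; auto. lra.
        unfold Rdiv. apply Rmult_le_compat_r; auto. left; apply Rinv_0_lt_compat; auto. lra.
        replace (16 / L * (2 * INR d)) with (32 * (INR d / L)) by (field; intro; lra).
        assert (INR d / L <= 16).
        { apply Rmult_le_reg_r with L; auto. unfold Rdiv. rewrite Rmult_assoc, Rinv_l by lra. lra. }
        lra. }
      assert (0 <= q / L) by (apply Rlt_le, Rdiv_lt_0_compat; auto). nra. }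
    apply (final_combine Rs d n S T t (1 + INR d) (1/32) C ph); auto; try lia; try lra.
Qed.

Lemma g_props v u Rs d : 0 < v <= u -> (forall r, In r Rs -> v <= r <= u) -> length Rs = d -> (1 <= d)%nat ->
  0 < gR Rs /\ v <= gR Rs * INR d <= u.
Proof.
  intros Hvu HRs HRl Hd.
  assert (HdR : 1 <= INR d) by (apply (le_INR 1); auto).
  destruct (Sinv_bounds v u Rs Hvu HRs) as [Sv1 Sv2]. rewrite HRl in Sv1, Sv2.
  assert (HSv : 0 < Sinv Rs). { eapply Rlt_le_trans; [|apply Sv1]. apply Rdiv_lt_0_compat; lra. }
  rewrite gR_Sinv. set (Sv := Sinv Rs) in *.
  split. apply Rinv_0_lt_compat; auto. split.
  - apply Rmult_le_reg_r with Sv; auto. replace (/ Sv * INR d * Sv) with (INR d) by (field; lra).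
    apply Rmult_le_reg_r with (/ v). apply Rinv_0_lt_compat; lra.
    replace (v * Sv * / v) with Sv by (field; lra). auto.
  - apply Rmult_le_reg_r with Sv; auto. replace (/ Sv * INR d * Sv) with (INR d) by (field; lra).
    apply Rmult_le_reg_r with (/ u). apply Rinv_0_lt_compat; lra.
    replace (u * Sv * / u) with Sv by (field; lra). auto.
Qed.

Lemma lnQ_nonneg v u N : 0 < v <= u -> 0 <= lnQ v u N.
Proof.
  intros Hvu. destruct (epsH_props v u N Hvu) as [He0 He1].
  unfold lnQ. apply Rmult_le_pos. rewrite <- ln_1. apply ln_le. lra.
  rewrite <- Rinv_1. apply Rinv_le_contravar; nra. left; apply Rinv_0_lt_compat; lra.
Qed.

Lemma case_large v u N Rs d n C : 0 < v <= u -> (1 <= N)%nat -> 2 <= 2 * v * INR N -> (1 <= d)%nat ->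
  length Rs = d -> (forall r, In r Rs -> v <= r <= u) -> (3 ^ d < n)%nat ->
  / sqrt (epsH u N) <= C -> exp (u * lnQ v u N) / sqrt (eps N) <= C ->
  exists a, approx_number_is Rs d n a /\
    (1/32) * (/ sqrt (INR d) * Rpower (INR n) (- gR Rs)) <= a <=
    C * (/ sqrt (INR d) * Rpower (INR n) (- gR Rs)).
Proof.
  intros Hvu HN HvN Hd HRl HRs Hn3 HC1 HC2.
  assert (HdR : 1 <= INR d) by (apply (le_INR 1); auto).
  assert (Hp3 : forall k, (1 <= 3 ^ k)%nat) by (induction k; simpl; lia).
  assert (H3d : (3 <= 3 ^ d)%nat) by (destruct d; [lia|]; simpl; specialize (Hp3 d); lia).
  assert (Hn1 : (1 <= n)%nat) by lia.
  assert (HnR : 1 <= INR n) by (apply (le_INR 1); auto).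
  destruct (g_props v u Rs d Hvu HRs HRl Hd) as [Hg0 [Hgd1 Hgd2]].
  set (g := gR Rs) in *.
  set (P := Rpower (INR n) (2 * g)).
  assert (HP1 : 1 <= P) by (apply Rpower_ge1; lra).
  set (ph := / sqrt (INR d) * Rpower (INR n) (- g)).
  assert (Hph0 : 0 <= ph).
  { unfold ph. apply Rmult_le_pos. left; apply Rinv_0_lt_compat, sqrt_lt_R0; lra. unfold Rpower; left; apply exp_pos. }
  assert (Hph : ph * ph = / INR d * / P).
  { unfold ph, P. replace (/ sqrt (INR d) * Rpower (INR n) (- g) * (/ sqrt (INR d) * Rpower (INR n) (- g)))
      with ((/ sqrt (INR d) * / sqrt (INR d)) * (Rpower (INR n) (- g) * Rpower (INR n) (- g))) by ring.
    rewrite <- Rinv_mult, sqrt_sqrt by lra. rewrite <- Rpower_plus.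
    replace (- g + - g) with (- (2 * g)) by ring. rewrite Rpower_Ropp. auto. }
  assert (HC0 : 0 <= C).
  { eapply Rle_trans; [|apply HC1]. left; apply Rinv_0_lt_compat, sqrt_lt_R0.
    destruct (epsH_props v u N Hvu); auto. }
  destruct (lower_H Rs d n Hd HRl) as [T [HT1 [HT2 HT3]]]; auto.
  { intros r Hr; destruct (HRs r Hr); lra. }
  fold g in HT3. fold P in HT3.
  assert (Hlow : 1 / 32 * ph <= / sqrt (1 + INR d * P)).
  { apply sq_lower; try lra. nra. rewrite Hph.
    replace (1 / 32 * (1 / 32) * (/ INR d * / P) * (1 + INR d * P)) with
      ((1 / 1024) * (/ (INR d * P) + 1)) by (field; split; intro; lra).
    assert (/ (INR d * P) <= 1). { rewrite <- Rinv_1. apply Rinv_le_contravar; nra. }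
    lra. }
  destruct (Rle_dec (INR d * lnQ v u N) (ln (INR n))) as [HQ|HQ].
  - destruct (upper_H v u N Rs d n) as [S [HS1 [HS2 HS3]]]; auto.
    fold g in HS3. fold P in HS3.
    destruct (epsH_props v u N Hvu) as [He0 He1].
    assert (Hup : / sqrt (epsH u N * INR d * P) <= C * ph).
    { apply sq_upper; auto. apply Rmult_lt_0_compat; [apply Rmult_lt_0_compat|]; lra. rewrite Hph.
      replace (C * C * (/ INR d * / P) * (epsH u N * INR d * P)) with (C * C * epsH u N) by (field; split; intro; lra).
      assert (/ sqrt (epsH u N) * / sqrt (epsH u N) = / epsH u N) by (rewrite <- Rinv_mult, sqrt_sqrt; lra).
      assert (/ epsH u N <= C * C).
      { rewrite <- H. apply Rmult_le_compat; auto; left; apply Rinv_0_lt_compat, sqrt_lt_R0; auto. }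
      apply Rmult_le_reg_r with (/ epsH u N). apply Rinv_0_lt_compat; auto.
      rewrite Rmult_assoc, Rinv_r by lra. lra. }
    apply (final_combine Rs d n S T (epsH u N * INR d * P) (1 + INR d * P) (1/32) C ph); auto; try lia.
    apply Rmult_lt_0_compat; [apply Rmult_lt_0_compat|]; lra. nra.
  - destruct (upper_M v N Rs d (3 ^ d)) as [S [HS1 [HS2 HS3]]]; auto; try lra.
    { intros r Hr; apply HRs; auto. }
    { lia. }
    set (t0 := tM N d (3 ^ d)) in *.
    destruct (dlt_props N HN) as [[Hd0 Hd1] _].
    assert (Heps : 0 < eps N) by (unfold eps; apply pow_lt; auto).
    pose proof ln2_gt. pose proof ln2_lt. pose proof ln3_ge.
    set (L0 := ln (INR (3 ^ d))).
    assert (HL0 : L0 = INR d * ln 3) by (unfold L0; rewrite pow_INR, ln_pow; [simpl; f_equal; f_equal; ring| simpl; lra]).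
    set (q0 := ln (1 + INR d * ln 2 / L0)).
    assert (Hq0 : 0 < q0 <= 1).
    { assert (0 < INR d * ln 2 / L0) by (rewrite HL0; apply Rdiv_lt_0_compat; nra).
      split. apply ln_pos'; lra.
      pose proof (ln_le_sub1 (1 + INR d * ln 2 / L0) ltac:(lra)). fold q0 in H3.
      assert (INR d * ln 2 / L0 <= 1).
      { rewrite HL0. apply Rmult_le_reg_r with (INR d * ln 3). nra.
        unfold Rdiv. rewrite Rmult_assoc, Rinv_l by nra. nra. }
      lra. }
    assert (Ht0 : t0 = eps N * L0 / q0) by reflexivity.
    assert (Ht0d : eps N * INR d <= t0).
    { rewrite Ht0. apply Rmult_le_reg_r with q0. lra.
      replace (eps N * L0 / q0 * q0) with (eps N * L0) by (field; intro; lra).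
      rewrite HL0. assert (0 < eps N * INR d) by nra. nra. }
    assert (HPb : P <= exp (2 * u * lnQ v u N)).
    { unfold P, Rpower. apply exp_le_exp. pose proof (lnQ_nonneg v u N Hvu).
      assert (ln (INR n) <= INR d * lnQ v u N) by lra.
      assert (2 * g * ln (INR n) <= 2 * g * (INR d * lnQ v u N)) by nra. nra. }
    assert (Hup : / sqrt t0 <= C * ph).
    { apply sq_upper; auto; try nra. rewrite Hph.
      assert (HC2' : exp (2 * u * lnQ v u N) / eps N <= C * C).
      { replace (exp (2 * u * lnQ v u N) / eps N) with
          ((exp (u * lnQ v u N) / sqrt (eps N)) * (exp (u * lnQ v u N) / sqrt (eps N))).
        apply Rmult_le_compat; auto; apply Rlt_le, Rdiv_lt_0_compat; try apply exp_pos; apply sqrt_lt_R0; auto.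
        unfold Rdiv. replace (exp (u * lnQ v u N) * / sqrt (eps N) * (exp (u * lnQ v u N) * / sqrt (eps N))) with
          ((exp (u * lnQ v u N) * exp (u * lnQ v u N)) * / (sqrt (eps N) * sqrt (eps N))) by (rewrite Rinv_mult; ring).
        rewrite sqrt_sqrt by lra. rewrite <- exp_plus. f_equal. f_equal. ring. }
      apply Rle_trans with (C * C * (/ INR d * / P) * (eps N * INR d)).
      - replace (C * C * (/ INR d * / P) * (eps N * INR d)) with (C * C * eps N * / P) by (field; split; intro; lra).
        assert (E1 : exp (2 * u * lnQ v u N) <= C * C * eps N).
        { apply Rmult_le_compat_r with (r := eps N) in HC2'; [|lra].
          replace (exp (2 * u * lnQ v u N) / eps N * eps N) with (exp (2 * u * lnQ v u N)) in HC2' by (field; intro; lra).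
          auto. }
        assert (E2 : P <= C * C * eps N) by lra.
        apply Rmult_le_compat_r with (r := / P) in E2; [|left; apply Rinv_0_lt_compat; lra].
        rewrite Rinv_r in E2 by lra. auto.
      - apply Rmult_le_compat_l; auto. apply Rmult_le_pos. nra.
        apply Rmult_le_pos; left; apply Rinv_0_lt_compat; lra. }
    apply (final_combine Rs d n S T t0 (1 + INR d * P) (1/32) C ph); auto; try lia.
    apply Rlt_le_trans with (eps N * INR d); auto. nra. nra.
Qed.

Theorem theorem2p1 :
  forall u v : R, 0 < v <= u ->
  exists c C : R, 0 < c <= C /\
    forall (d : nat) (Rs : list R),
      (1 <= d)%nat -> length Rs = d ->
      (forall r, In r Rs -> v <= r <= u) -> In u Rs -> In v Rs ->
      forall n : nat, (1 <= n)%nat ->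
        exists a : R, approx_number_is Rs d n a /\
          c * phi Rs d n <= a <= C * phi Rs d n.
Proof.
  intros u v Hvu.
  set (N := S (Kceil (/ v))).
  assert (HN : (1 <= N)%nat) by (unfold N; lia).
  assert (HvN : 2 <= 2 * v * INR N).
  { unfold N. rewrite S_INR. destruct (Kceil_spec (/ v)) as [K1 K2]. left; apply Rinv_0_lt_compat; lra.
    assert (v * / v = 1) by (field; lra). nra. }
  set (A1 := / sqrt (eps N)).
  set (A2 := exp (u * lnQ v u N) / sqrt (eps N)).
  set (A3 := / sqrt (epsH u N)).
  destruct (dlt_props N HN) as [[Hd0 Hd1] _].
  assert (Heps : 0 < eps N) by (unfold eps; apply pow_lt; auto).
  destruct (epsH_props v u N Hvu) as [He0 He1].
  assert (HA1 : 0 <= A1) by (left; apply Rinv_0_lt_compat, sqrt_lt_R0; auto).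
  assert (HA2 : 0 <= A2) by (left; apply Rdiv_lt_0_compat; [apply exp_pos| apply sqrt_lt_R0; auto]).
  assert (HA3 : 0 <= A3) by (left; apply Rinv_0_lt_compat, sqrt_lt_R0; auto).
  exists (1/32), (1 + A1 + A2 + A3). split. split; lra.
  intros d Rs Hd HRl HRs Hu Hv n Hn.
  unfold phi. destruct (Nat.leb_spec n d) as [Hnd|Hnd].
  - apply case_small; auto. lra.
  - destruct (Nat.leb_spec n (3 ^ d)) as [Hn3|Hn3].
    + apply (case_mid v u N); auto. fold A1. lra.
    + apply (case_large v u N); auto. fold A3; lra. fold A2; lra.
Qed.
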